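(* Let $>$ be a $\mathcal B$-compatible reduction order. If $(\mathcal E,\varnothing)\vdash^*_{\mathcal I_B}(\varnothing,\mathcal R)$ is a fair run and neither Compose nor Collapse of $\mathcal I_B$ is applicable to $(\varnothing,\mathcal R)$, then $\mathcal R$ is canonical modulo $\mathcal B$.
   Context: Terms over a signature $\mathcal F$ and variables. For a set $\mathcal E$ of pairs of terms (equations and rules read as oriented pairs), $s\to_{\mathcal E}t$ iff $s|_p=\ell\sigma$, $t=s[r\sigma]_p$ for some $(\ell,r)\in\mathcal E$, position $p$, substitution $\sigma$; $\leftarrow$ is the inverse, $\leftrightarrow$ the symmetric closure. $\mathcal B$ is a fixed ES with $\mathrm{Var}(\ell)=\mathrm{Var}(r)$ for all $\ell\approx r\in\mathcal B$; $\sim_{\mathcal B}=\leftrightarrow^*_{\mathcal B}$, $\mathcal B^\pm=\mathcal B\cup\{t\approx s\mid s\approx t\in\mathcal B\}$; $\to_{\mathcal R/\mathcal B}=\sim_{\mathcal B}\cdot\to_{\mathcal R}\cdot\sim_{\mathcal B}$; $s\downarrow^\sim_{\mathcal R}t$ iff $s\to^*_{\mathcal R}\cdot\sim_{\mathcal B}\cdot\leftarrow^*_{\mathcal R}t$. Terminating modulo $\mathcal B$: no infinite $\to_{\mathcal R/\mathcal B}$-sequence; Church–Rosser modulo $\mathcal B$: $\leftrightarrow^*_{\mathcal R\cup\mathcal B}\subseteq\downarrow^\sim_{\mathcal R}$; complete modulo $\mathcal B$: both. A TRS is left-reduced if for every rule $\ell\to r$, $\ell$ is a normal form of the TRS without that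 rule; right-$\mathcal B$-reduced if for every rule $\ell\to r$, $r$ is a normal form of $\to_{\mathcal R/\mathcal B}$; canonical modulo $\mathcal B$ if complete modulo $\mathcal B$, left-reduced and right-$\mathcal B$-reduced. A $\mathcal B$-compatible reduction order is a well-founded order on terms closed under contexts and substitutions with $\sim_{\mathcal B}\cdot>\cdot\sim_{\mathcal B}\subseteq>$. The inference system $\mathcal I_B$ (parameterized by $>$) on pairs $(\mathcal E,\mathcal R)$ ($\uplus$ disjoint union, $s\approx^\pm t$ means $s\approx t$ or $t\approx s$): Deduce: $(\mathcal E,\mathcal R)\vdash(\mathcal E\cup\{s\approx t\},\mathcal R)$ if $s\leftarrow_{\mathcal R}\cdot\to_{\mathcal R\cup\mathcal B^\pm}t$. Orient: $(\mathcal E\uplus\{s\approx^\pm t\},\mathcal R)\vdash(\mathcal E,\mathcal R\cup\{s\to t\})$ if $s>t$. Delete: $(\mathcal E\uplus\{s\approx t\},\mathcal R)\vdash(\mathcal E,\mathcal R)$ if $s\sim_{\mathcal B}t$. Simplify: $(\mathcal E\uplus\{s\approx^\pm t\},\mathcal R)\vdash(\mathcal E\cup\{u\approx t\},\mathcal R)$ if $s\to_{\mathcal R}u$. Collapse: $(\mathcal E,\mathcal R\uplus\{s\to t\})\vdash(\mathcal E\cup\{u\approx t\},\mathcal R)$ if $s\to_{\mathcal R}u$. Compose: $(\mathcal E,\mathcal R\uplus\{s\to t\})\vdash(\mathcal E,\mathcal R\cup\{s\to u\})$ if $t\to_{\mathcal R}u$. A run for $\mathcal E$ goes from $(\mathcal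 E_0,\mathcal R_0)=(\mathcal E,\varnothing)$ to $(\mathcal E_n,\mathcal R_n)$; it is fair if $\mathcal R_n$ is left-linear and $\mathrm{PCP}(\mathcal R_n)\cup\mathrm{PCP}^\pm(\mathcal R_n,\mathcal B^\pm)\subseteq\ \downarrow^\sim_{\mathcal R_n}\cup\bigcup_{i=0}^n\leftrightarrow_{\mathcal E_i}$. Critical pairs: for sets of oriented pairs $\mathcal R_1,\mathcal R_2$ (equations of $\mathcal B^\pm$ read as oriented pairs), an overlap is $\langle\ell_1\to r_1,p,\ell_2\to r_2\rangle$ with $\ell_i\to r_i$ variants of elements of $\mathcal R_i$ without common variables, $p$ a non-variable position of $\ell_2$, $\ell_1$ and $\ell_2|_p$ unifiable, and the two rules not variants if $p=\epsilon$; with an mgu $\sigma$ it yields the critical pair $\ell_2\sigma[r_1\sigma]_p\approx r_2\sigma$, prime if all proper subterms of $\ell_2\sigma|_p$ are normal forms w.r.t. the TRS $\mathcal R$ under consideration. $\mathrm{PCP}(\mathcal R)$: prime critical pairs from overlaps of $\mathcal R$ with itself; $\mathrm{PCP}^\pm(\mathcal R,\mathcal B^\pm)$: prime critical pairs from overlaps between $\mathcal R$ and $\mathcal B^\pm$ in either order. *)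

(* Defs.v *)
From Stdlib Require Import List Relations.
Import ListNotations.

Set Implicit Arguments.

Section TRS.

Context {F : Type}.

Definition var := nat.

Inductive term : Type :=
| Var : var -> term
| Fun : F -> list term -> term.

(* sets of (oriented) pairs of terms: equational systems / TRSs *)
Definition rel := term -> term -> Prop.

Definition empty_rel : rel := fun _ _ => False.
Definition union (A B : rel) : rel := fun s t => A s t \/ B s t.
Definition add (A : rel) (a b : term) : rel := fun s t => A s t \/ (s = a /\ t = b).
Definition seteq (A B : rel) : Prop := forall s t, A s t <-> B s t.
Definition disj_add (A A' : rel) (a b : term) : Prop := seteq A (add A' a b) /\ ~ A' a b.
Definition disj_add_pm (A A' : rel) (a b : term) : Prop :=
  disj_add A A' a b \/ disj_add A A' b a.
Definition pm (A : rel) : rel := fun s t => A s t \/ A t s.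

Definition subst := var -> term.

Fixpoint app_subst (sigma : subst) (t : term) : term :=
  match t with
  | Var x => sigma x
  | Fun f ts => Fun f (map (app_subst sigma) ts)
  end.

Inductive occurs (x : var) : term -> Prop :=
| occ_var : occurs x (Var x)
| occ_fun : forall f ts t, In t ts -> occurs x t -> occurs x (Fun f ts).

Definition pos := list nat.

Fixpoint subterm_at (t : term) (p : pos) : option term :=
  match p with
  | [] => Some t
  | i :: p' =>
      match t with
      | Var _ => None
      | Fun f ts =>
          match nth_error ts i with
          | Some u => subterm_at u p'
          | None => None
          end
      end
  end.

Fixpoint update_nth {A : Type} (g : A -> A) (i : nat) (l : list A) : list A :=
  match l, i with
  | [], _ => []
  | a :: l', 0 => g a :: l'
  | a :: l', S i' => a :: update_nth g i' l'
  end.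

(* t[s]_p  (meaningful when p is a position of t) *)
Fixpoint replace_at (t : term) (p : pos) (s : term) : term :=
  match p with
  | [] => s
  | i :: p' =>
      match t with
      | Var x => Var x
      | Fun f ts => Fun f (update_nth (fun u => replace_at u p' s) i ts)
      end
  end.

Definition rstep (E : rel) : rel := fun s t =>
  exists l r p sigma, E l r /\ subterm_at s p = Some (app_subst sigma l)
                      /\ t = replace_at s p (app_subst sigma r).

Definition rsteps (E : rel) : rel := clos_refl_trans term (rstep E).

Definition sstep (E : rel) : rel := fun s t => rstep E s t \/ rstep E t s.

Definition conv (E : rel) : rel := clos_refl_trans term (sstep E).

Definition simB (B : rel) : rel := conv B.

Definition rstep_mod (R B : rel) : rel := fun s t =>
  exists s' t', simB B s s' /\ rstep R s' t' /\ simB B t' t.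

Definition joinable_mod (R B : rel) : rel := fun s t =>
  exists u v, rsteps R s u /\ simB B u v /\ rsteps R t v.

Definition terminating_mod (R B : rel) : Prop :=
  ~ exists f : nat -> term, forall i, rstep_mod R B (f i) (f (S i)).

Definition church_rosser_mod (R B : rel) : Prop :=
  forall s t, conv (union R B) s t -> joinable_mod R B s t.

Definition complete_mod (R B : rel) : Prop :=
  terminating_mod R B /\ church_rosser_mod R B.

Definition normal_form (R : rel) (t : term) : Prop := ~ exists u, rstep R t u.

Definition normal_form_mod (R B : rel) (t : term) : Prop := ~ exists u, rstep_mod R B t u.

Definition remove (R : rel) (l r : term) : rel := fun l' r' => R l' r' /\ (l', r') <> (l, r).

Definition left_reduced (R : rel) : Prop :=
  forall l r, R l r -> normal_form (remove R l r) l.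

Definition right_B_reduced (R B : rel) : Prop :=
  forall l r, R l r -> normal_form_mod R B r.

Definition canonical_mod (R B : rel) : Prop :=
  complete_mod R B /\ left_reduced R /\ right_B_reduced R B.

Definition var_preserving (B : rel) : Prop :=
  forall l r, B l r -> forall x, occurs x l <-> occurs x r.

Definition reduction_order_compat (B : rel) (gt : rel) : Prop :=
  (forall s, ~ gt s s) /\
  (forall s t u, gt s t -> gt t u -> gt s u) /\
  well_founded (fun t s => gt s t) /\
  (forall s t u p, subterm_at u p <> None -> gt s t ->
                   gt (replace_at u p s) (replace_at u p t)) /\
  (forall s t sigma, gt s t -> gt (app_subst sigma s) (app_subst sigma t)) /\
  (forall s s' t' t, simB B s s' -> gt s' t' -> simB B t' t -> gt s t).

Definition deduce_step (B : rel) (E0 R0 E1 R1 : rel) : Prop :=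
  exists s t, (exists u, rstep R0 u s /\ rstep (union R0 (pm B)) u t)
              /\ seteq E1 (add E0 s t) /\ seteq R1 R0.

Definition orient_step (gt : rel) (E0 R0 E1 R1 : rel) : Prop :=
  exists s t, gt s t /\ disj_add_pm E0 E1 s t /\ seteq R1 (add R0 s t).

Definition delete_step (B : rel) (E0 R0 E1 R1 : rel) : Prop :=
  exists s t, simB B s t /\ disj_add E0 E1 s t /\ seteq R1 R0.

Definition simplify_step (E0 R0 E1 R1 : rel) : Prop :=
  exists E' s t u, disj_add_pm E0 E' s t /\ rstep R0 s u
                   /\ seteq E1 (add E' u t) /\ seteq R1 R0.

Definition collapse_step (E0 R0 E1 R1 : rel) : Prop :=
  exists s t u, disj_add R0 R1 s t /\ rstep R1 s u /\ seteq E1 (add E0 u t).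

Definition compose_step (E0 R0 E1 R1 : rel) : Prop :=
  exists R' s t u, disj_add R0 R' s t /\ rstep R' t u
                   /\ seteq R1 (add R' s u) /\ seteq E1 E0.

Definition IB_step (gt B : rel) (E0 R0 E1 R1 : rel) : Prop :=
  deduce_step B E0 R0 E1 R1 \/ orient_step gt E0 R0 E1 R1 \/
  delete_step B E0 R0 E1 R1 \/ simplify_step E0 R0 E1 R1 \/
  collapse_step E0 R0 E1 R1 \/ compose_step E0 R0 E1 R1.

Definition collapse_applicable (E R : rel) : Prop :=
  exists E' R', collapse_step E R E' R'.

Definition compose_applicable (E R : rel) : Prop :=
  exists E' R', compose_step E R E' R'.

Definition is_run (gt B : rel) (E : rel) (Es Rs : nat -> rel) (n : nat) : Prop :=
  seteq (Es 0) E /\ seteq (Rs 0) empty_rel /\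
  forall i, i < n -> IB_step gt B (Es i) (Rs i) (Es (S i)) (Rs (S i)).

Definition linear (t : term) : Prop :=
  forall x p q, subterm_at t p = Some (Var x) -> subterm_at t q = Some (Var x) -> p = q.

Definition left_linear (R : rel) : Prop := forall l r, R l r -> linear l.

Definition variant (l' r' l r : term) : Prop :=
  exists rho rho' : var -> var,
    (forall x, rho' (rho x) = x /\ rho (rho' x) = x) /\
    l' = app_subst (fun x => Var (rho x)) l /\ r' = app_subst (fun x => Var (rho x)) r.

Definition is_mgu (sigma : subst) (s t : term) : Prop :=
  app_subst sigma s = app_subst sigma t /\
  forall tau, app_subst tau s = app_subst tau t ->
    exists delta, forall x, tau x = app_subst delta (sigma x).

Definition overlap (R1 R2 : rel) (l1 r1 : term) (p : pos) (l2 r2 : term) : Prop :=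
  (exists a b, R1 a b /\ variant l1 r1 a b) /\
  (exists a b, R2 a b /\ variant l2 r2 a b) /\
  (forall x, (occurs x l1 \/ occurs x r1) -> ~ (occurs x l2 \/ occurs x r2)) /\
  (exists u, subterm_at l2 p = Some u /\ (forall x, u <> Var x) /\
             exists sigma, app_subst sigma l1 = app_subst sigma u) /\
  (p = [] -> ~ variant l1 r1 l2 r2).

(* prime critical pairs (w.r.t. the TRS R) from overlaps of R1 on R2 *)
Definition pcp_of (R : rel) (R1 R2 : rel) : rel := fun s t =>
  exists l1 r1 p l2 r2 sigma u,
    overlap R1 R2 l1 r1 p l2 r2 /\
    subterm_at l2 p = Some u /\ is_mgu sigma l1 u /\
    (forall q v, q <> [] -> subterm_at (app_subst sigma u) q = Some v -> normal_form R v) /\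
    s = replace_at (app_subst sigma l2) p (app_subst sigma r1) /\
    t = app_subst sigma r2.

Definition PCP (R : rel) : rel := pcp_of R R R.

Definition PCP_pm (R B : rel) : rel :=
  union (pcp_of R R (pm B)) (pcp_of R (pm B) R).

Definition fair (B : rel) (Es Rs : nat -> rel) (n : nat) : Prop :=
  left_linear (Rs n) /\
  forall s t, union (PCP (Rs n)) (PCP_pm (Rs n) B) s t ->
    joinable_mod (Rs n) B s t \/ exists i, i <= n /\ sstep (Es i) s t.

End TRS.

Arguments empty_rel {F}.

(* Main.v *)
Require Import Defs.
From Stdlib Require Import List Relations Lia Arith PeanoNat Classical FunctionalExtensionality PropExtensionality.
Require Import Defs.
Import ListNotations.

Section P1.
Context {F : Type}.
Notation T := (@term F).

Fixpoint term_ind2 (P : T -> Prop) (Hv : forall x, P (Var x))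
  (Hf : forall f ts, Forall P ts -> P (Fun f ts)) (t : T) : P t :=
  match t with
  | Var x => Hv x
  | Fun f ts => Hf f ts ((fix go (l : list T) : Forall P l :=
       match l with [] => @Forall_nil _ P | u :: l' => @Forall_cons _ P u l' (term_ind2 P Hv Hf u) (go l') end) ts)
  end.

Lemma nth_update_same {A} (g : A -> A) i l :
  nth_error (update_nth g i l) i = option_map g (nth_error l i).
Proof. revert i; induction l; intros [|i]; simpl; auto. Qed.

Lemma nth_update_other {A} (g : A -> A) i j l :
  i <> j -> nth_error (update_nth g i l) j = nth_error l j.
Proof. revert i j; induction l; intros [|i] [|j] H; simpl; auto; congruence || (apply IHl; congruence). Qed.

Lemma update_nth_ext {A} (g h : A -> A) i l a :
  nth_error l i = Some a -> g a = h a -> update_nth g i l = update_nth h i l.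
Proof. revert i; induction l; intros [|i] H1 H2; simpl in *; try congruence.
  f_equal; auto. Qed.

Lemma update_nth_ext_all {A} (g h : A -> A) i l :
  (forall a, g a = h a) -> update_nth g i l = update_nth h i l.
Proof. revert i; induction l; intros [|i] H; simpl in *; f_equal; auto. Qed.

Lemma update_nth_id {A} (g : A -> A) i l a :
  nth_error l i = Some a -> g a = a -> update_nth g i l = l.
Proof. revert i; induction l; intros [|i] H1 H2; simpl in *; try congruence.
  f_equal; eauto. Qed.

Lemma update_nth_none {A} (g : A -> A) i l :
  nth_error l i = None -> update_nth g i l = l.
Proof. revert i; induction l; intros [|i] H1; simpl in *; try congruence. f_equal; eauto. Qed.

Lemma update_nth_comp {A} (g h : A -> A) i l :
  update_nth g i (update_nth h i l) = update_nth (fun x => g (h x)) i l.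
Proof. revert i; induction l; intros [|i]; simpl; f_equal; auto. Qed.

Lemma update_nth_comm {A} (g h : A -> A) i j l :
  i <> j -> update_nth g i (update_nth h j l) = update_nth h j (update_nth g i l).
Proof. revert i j; induction l; intros [|i] [|j] H; simpl; try congruence; f_equal; auto. Qed.

Lemma map_update_nth {A B} (f : A -> B) (g : A -> A) (g' : B -> B) i l :
  (forall a, nth_error l i = Some a -> f (g a) = g' (f a)) ->
  map f (update_nth g i l) = update_nth g' i (map f l).
Proof. revert i; induction l; intros [|i] H; simpl in *; f_equal; auto. Qed.

Lemma update_nth_app {A} (g : A -> A) pre a post :
  update_nth g (length pre) (pre ++ a :: post) = pre ++ g a :: post.
Proof. induction pre; simpl; f_equal; auto. Qed.

Lemma nth_error_app_len {A} (pre : list A) a post :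
  nth_error (pre ++ a :: post) (length pre) = Some a.
Proof. induction pre; simpl; auto. Qed.

Lemma replace_nil (t s : T) : replace_at t [] s = s.
Proof. destruct t; reflexivity. Qed.

Lemma subterm_at_app (t : T) p q :
  subterm_at t (p ++ q) = match subterm_at t p with Some u => subterm_at u q | None => None end.
Proof.
  revert t; induction p as [|i p IH]; intros t; simpl; auto.
  destruct t; auto. destruct (nth_error l i); auto.
Qed.

Lemma subterm_at_app_some (t u : T) p q :
  subterm_at t p = Some u -> subterm_at t (p ++ q) = subterm_at u q.
Proof. intros H; rewrite subterm_at_app, H; auto. Qed.

Lemma replace_at_app (t u s : T) p q :
  subterm_at t p = Some u -> replace_at t (p ++ q) s = replace_at t p (replace_at u q s).
Proof.
  revert t; induction p as [|i p IH]; intros t H.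
  - simpl in *. inversion H; subst. rewrite replace_nil; reflexivity.
  - destruct t; simpl in H; [discriminate|]. destruct (nth_error l i) eqn:E; [|discriminate].
    simpl. f_equal. apply update_nth_ext with t; auto.
Qed.

Lemma subterm_replace_same (t s : T) p :
  subterm_at t p <> None -> subterm_at (replace_at t p s) p = Some s.
Proof.
  revert t; induction p as [|i p IH]; intros t H; simpl in *; rewrite ?replace_nil; auto.
  destruct t; [congruence|]. simpl. rewrite nth_update_same.
  destruct (nth_error l i) eqn:E; simpl; [|congruence]. auto.
Qed.

Lemma replace_at_id (t u : T) p :
  subterm_at t p = Some u -> replace_at t p u = t.
Proof.
  revert t; induction p as [|i p IH]; intros t H; simpl in *; rewrite ?replace_nil; [congruence|].
  destruct t; [discriminate|]. destruct (nth_error l i) eqn:E; [|discriminate].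
  simpl; f_equal. apply update_nth_id with t; auto.
Qed.

Lemma replace_replace_same (t a b : T) p :
  replace_at (replace_at t p a) p b = replace_at t p b.
Proof.
  revert t; induction p as [|i p IH]; intros t; simpl; rewrite ?replace_nil; auto.
  destruct t; auto. simpl; f_equal. rewrite update_nth_comp.
  destruct (nth_error l i) eqn:E.
  - apply update_nth_ext with t; auto.
  - rewrite !update_nth_none; auto.
Qed.

Lemma valid_replace (t s : T) p :
  subterm_at t p <> None -> subterm_at (replace_at t p s) p <> None.
Proof. intros H; rewrite subterm_replace_same; congruence. Qed.

Definition parallel (p1 p2 : pos) : Prop :=
  exists c i j q1 q2, i <> j /\ p1 = c ++ i :: q1 /\ p2 = c ++ j :: q2.

Lemma pos_cases (p1 p2 : pos) :
  (exists q, p2 = p1 ++ q) \/ (exists q, p1 = p2 ++ q) \/ parallel p1 p2.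
Proof.
  revert p2; induction p1 as [|i p1 IH]; intros p2.
  - left; exists p2; auto.
  - destruct p2 as [|j p2].
    + right; left; exists (i :: p1); auto.
    + destruct (Nat.eq_dec i j) as [<-|Hij].
      * destruct (IH p2) as [[q ->]|[[q ->]|(c&a&b&q1&q2&H&->&->)]].
        -- left; exists q; auto.
        -- right; left; exists q; auto.
        -- right; right; exists (i :: c), a, b, q1, q2; auto.
      * right; right; exists [], i, j, p1, p2; auto.
Qed.

Lemma subterm_parallel (t a : T) p1 p2 :
  parallel p1 p2 -> subterm_at (replace_at t p1 a) p2 = subterm_at t p2.
Proof.
  intros (c&i&j&q1&q2&Hij&->&->).
  revert t; induction c as [|k c IH]; intros t; simpl.
  - destruct t; simpl; auto. rewrite nth_update_other; auto.
  - destruct t; simpl; auto. destruct (nth_error l k) eqn:E.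
    + rewrite nth_update_same, E; simpl. auto.
    + rewrite update_nth_none by auto. rewrite E; auto.
Qed.

Lemma replace_parallel (t a b : T) p1 p2 :
  parallel p1 p2 -> replace_at (replace_at t p1 a) p2 b = replace_at (replace_at t p2 b) p1 a.
Proof.
  intros (c&i&j&q1&q2&Hij&->&->).
  revert t; induction c as [|k c IH]; intros t; simpl.
  - destruct t; simpl; auto. f_equal. rewrite update_nth_comm; auto.
  - destruct t; simpl; auto. f_equal. rewrite !update_nth_comp. apply update_nth_ext_all; auto.
Qed.

End P1.

Section P2.
Context {F : Type}.
Notation T := (@term F).

Lemma subst_comp (t : T) (s1 s2 : subst) :
  app_subst s2 (app_subst s1 t) = app_subst (fun x => app_subst s2 (s1 x)) t.
Proof.
  induction t using term_ind2; simpl; auto. f_equal. rewrite map_map.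
  induction H; simpl; f_equal; auto.
Qed.

Lemma subst_ext (t : T) (s1 s2 : subst) :
  (forall x, occurs x t -> s1 x = s2 x) -> app_subst s1 t = app_subst s2 t.
Proof.
  induction t using term_ind2; intros Hx; simpl.
  - apply Hx; constructor.
  - f_equal. induction H; simpl; auto. f_equal.
    + apply H. intros y Hy. apply Hx. econstructor; [left; reflexivity|auto].
    + apply IHForall. intros y Hy. apply Hx. inversion Hy; subst. econstructor; [right; eauto|auto].
Qed.

Lemma subst_ext_inv (t : T) (s1 s2 : subst) x :
  app_subst s1 t = app_subst s2 t -> occurs x t -> s1 x = s2 x.
Proof.
  intros H Ho. induction Ho; simpl in H; auto.
  injection H; intros Hm. apply IHHo.
  clear -H0 Hm. induction ts; simpl in *; [contradiction|].
  injection Hm; intros; destruct H0; subst; auto.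
Qed.

Lemma subst_id (t : T) : app_subst (fun x => Var x) t = t.
Proof.
  induction t using term_ind2; simpl; auto. f_equal. induction H; simpl; f_equal; auto.
Qed.

Lemma occurs_subst (t : T) s y :
  occurs y (app_subst s t) -> exists x, occurs x t /\ occurs y (s x).
Proof.
  induction t using term_ind2; simpl; intros Ho.
  - exists x; split; auto. constructor.
  - inversion Ho; subst. apply in_map_iff in H2 as (u&<-&Hu).
    rewrite Forall_forall in H. destruct (H u Hu H3) as (x&Hx1&Hx2).
    exists x; split; auto. econstructor; eauto.
Qed.

Lemma occurs_subst2 (t : T) s x y :
  occurs x t -> occurs y (s x) -> occurs y (app_subst s t).
Proof.
  intros H; induction H; simpl; auto. intros Hy. econstructor; [apply in_map; eauto|auto].
Qed.

Lemma occurs_pos (t : T) x : occurs x t -> exists p, subterm_at t p = Some (Var x).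
Proof.
  induction 1.
  - exists []; reflexivity.
  - destruct IHoccurs as (p&Hp). apply In_nth_error in H as (i&Hi).
    exists (i :: p); simpl. rewrite Hi; auto.
Qed.

Lemma pos_occurs (t u : T) p x : subterm_at t p = Some u -> occurs x u -> occurs x t.
Proof.
  revert t; induction p as [|i p IH]; intros t H Ho; simpl in H.
  - congruence.
  - destruct t; [discriminate|]. destruct (nth_error l i) eqn:E; [|discriminate].
    econstructor; [eapply nth_error_In; eauto| eauto].
Qed.

Lemma subterm_at_subst (t u : T) p s :
  subterm_at t p = Some u -> subterm_at (app_subst s t) p = Some (app_subst s u).
Proof.
  revert t; induction p as [|i p IH]; intros t H; simpl in *.
  - congruence.
  - destruct t; [discriminate|]. simpl. rewrite nth_error_map.
    destruct (nth_error l i); simpl; [auto|discriminate].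
Qed.

Lemma replace_at_subst (t r : T) p s :
  subterm_at t p <> None ->
  app_subst s (replace_at t p r) = replace_at (app_subst s t) p (app_subst s r).
Proof.
  revert t; induction p as [|i p IH]; intros t H; simpl in *.
  - rewrite !replace_nil; auto.
  - destruct t; [congruence|]. simpl. f_equal.
    apply map_update_nth. intros a Ha. rewrite Ha in H. auto.
Qed.

Lemma subterm_at_subst_inv (t v : T) p s :
  subterm_at (app_subst s t) p = Some v ->
  (exists u, subterm_at t p = Some u /\ (forall x, u <> Var x) /\ v = app_subst s u) \/
  (exists p1 p2 x, p = p1 ++ p2 /\ subterm_at t p1 = Some (Var x) /\ subterm_at (s x) p2 = Some v).
Proof.
  revert t; induction p as [|i p IH]; intros t H.
  - destruct t.
    + right. exists [], [], v0; simpl in *; auto.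
    + left. exists (Fun f l); simpl in *; split; auto; split; [congruence|]. congruence.
  - destruct t.
    + right. exists [], (i :: p), v0; simpl in *; auto.
    + simpl in H. rewrite nth_error_map in H.
      destruct (nth_error l i) eqn:E; simpl in H; [|discriminate].
      destruct (IH _ H) as [(u&H1&H2&H3)|(p1&p2&x&->&H1&H2)].
      * left. exists u; simpl; rewrite E; auto.
      * right. exists (i :: p1), p2, x; simpl; rewrite E; auto.
Qed.

Fixpoint size (t : T) : nat :=
  match t with Var _ => 1 | Fun _ ts => S (list_sum (map size ts)) end.

Lemma size_pos (t : T) : 0 < size t.
Proof. destruct t; simpl; lia. Qed.

Lemma list_sum_in (l : list nat) x : In x l -> x <= list_sum l.
Proof. induction l; simpl; intros []; subst; try lia. specialize (IHl H); lia. Qed.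

Lemma size_subterm (t u : T) p :
  subterm_at t p = Some u -> size u <= size t /\ (p <> [] -> size u < size t).
Proof.
  revert t; induction p as [|i p IH]; intros t H; simpl in H.
  - inversion H; subst; split; [lia|congruence].
  - destruct t; [discriminate|]. destruct (nth_error l i) eqn:E; [|discriminate].
    destruct (IH _ H) as [H1 _].
    assert (size t <= list_sum (map size l)).
    { apply list_sum_in, in_map. eapply nth_error_In; eauto. }
    simpl; split; [|intros _]; lia.
Qed.

End P2.

Section P3.
Context {F : Type}.
Notation T := (@term F).
Implicit Types (E Rl : @rel F).

Definition ctxc Rl := forall (u s t : T) p, Rl s t -> subterm_at u p = Some s -> Rl u (replace_at u p t).
Definition substc Rl := forall (s t : T) sg, Rl s t -> Rl (app_subst sg s) (app_subst sg t).

Lemma ctxc' Rl (u s t : T) p : ctxc Rl -> Rl s t -> subterm_at u p <> None ->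
  Rl (replace_at u p s) (replace_at u p t).
Proof.
  intros H Hst Hv. rewrite <- (replace_replace_same u s t p). unfold ctxc in H. apply (H _ s); auto.
  apply subterm_replace_same; auto.
Qed.

Lemma rstep_ctxc E : ctxc (rstep E).
Proof.
  intros u s t p (l&r&q&sg&Hlr&Hq&->) Hp.
  exists l, r, (p ++ q), sg. split; auto. split.
  - erewrite subterm_at_app_some; eauto.
  - erewrite replace_at_app; eauto.
Qed.

Lemma rstep_substc E : substc (rstep E).
Proof.
  intros s t sg (l&r&q&s1&Hlr&Hq&->).
  exists l, r, q, (fun x => app_subst sg (s1 x)). split; auto. split.
  - rewrite <- subst_comp. apply subterm_at_subst; auto.
  - rewrite replace_at_subst by congruence. rewrite subst_comp; auto.
Qed.

Lemma rstep_at E l r (v : T) p sg : E l r -> subterm_at v p = Some (app_subst sg l) ->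
  rstep E v (replace_at v p (app_subst sg r)).
Proof. intros; exists l, r, p, sg; auto. Qed.

Lemma rt_ctxc Rl : ctxc Rl -> ctxc (clos_refl_trans _ Rl).
Proof.
  intros H u s t p Hst. revert u. induction Hst; intros u Hu.
  - apply rt_step; eauto.
  - rewrite replace_at_id by eauto. apply rt_refl.
  - eapply rt_trans; [apply IHHst1; eauto|].
    rewrite <- (replace_replace_same u y z p). apply IHHst2.
    apply subterm_replace_same; congruence.
Qed.

Lemma rt_substc Rl : substc Rl -> substc (clos_refl_trans _ Rl).
Proof.
  intros H s t sg Hst. induction Hst.
  - apply rt_step; auto.
  - apply rt_refl.
  - eapply rt_trans; eauto.
Qed.

Lemma sstep_ctxc E : ctxc (sstep E).
Proof.
  intros u s t p [H|H] Hp.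
  - left; eapply rstep_ctxc; eauto.
  - right. assert (Hx := @ctxc' (rstep E) u t s p (@rstep_ctxc E) H ltac:(congruence)).
    rewrite (replace_at_id _ _ _ Hp) in Hx. exact Hx.
Qed.

Lemma sstep_substc E : substc (sstep E).
Proof. intros s t sg [H|H]; [left|right]; apply rstep_substc; auto. Qed.

Lemma rsteps_ctxc E : ctxc (rsteps E).
Proof. apply rt_ctxc, rstep_ctxc. Qed.
Lemma rsteps_substc E : substc (rsteps E).
Proof. apply rt_substc, rstep_substc. Qed.
Lemma conv_ctxc E : ctxc (conv E).
Proof. apply rt_ctxc, sstep_ctxc. Qed.
Lemma conv_substc E : substc (conv E).
Proof. apply rt_substc, sstep_substc. Qed.

Lemma conv_sym E (s t : T) : conv E s t -> conv E t s.
Proof.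
  induction 1.
  - apply rt_step. destruct H; [right|left]; auto.
  - apply rt_refl.
  - eapply rt_trans; eauto.
Qed.

Lemma conv_trans E (s t u : T) : conv E s t -> conv E t u -> conv E s u.
Proof. apply rt_trans. Qed.

Lemma rstep_mono E E' (s t : T) : (forall a b, E a b -> E' a b) -> rstep E s t -> rstep E' s t.
Proof. intros H (l&r&p&sg&H1&H2&H3). exists l, r, p, sg; auto. Qed.

Lemma rsteps_mono E E' (s t : T) : (forall a b, E a b -> E' a b) -> rsteps E s t -> rsteps E' s t.
Proof. intros H; induction 1; [apply rt_step; eapply rstep_mono; eauto|apply rt_refl|eapply rt_trans; eauto]. Qed.

Lemma rstep_union E E' (s t : T) : rstep (union E E') s t -> rstep E s t \/ rstep E' s t.
Proof. intros (l&r&p&sg&[H1|H1]&H2&H3); [left|right]; exists l, r, p, sg; auto. Qed.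

Lemma rstep_pm E (s t : T) : rstep (pm E) s t <-> sstep E s t.
Proof.
  split.
  - intros (l&r&p&sg&[H1|H1]&H2&H3).
    + left; exists l, r, p, sg; auto.
    + right. subst t. exists r, l, p, sg. split; auto. split.
      * apply subterm_replace_same; congruence.
      * rewrite replace_replace_same, replace_at_id; auto.
  - intros [H|H].
    + eapply rstep_mono; [|eauto]. intros a b Hab; left; auto.
    + destruct H as (l&r&p&sg&H1&H2&->). exists r, l, p, sg. split; [right; auto|]. split.
      * apply subterm_replace_same; congruence.
      * rewrite replace_replace_same, replace_at_id; auto.
Qed.

Lemma sstep_sym E (s t : T) : sstep E s t -> sstep E t s.
Proof. intros [H|H]; [right|left]; auto. Qed.

Lemma fun_arg_step Rl f pre post (a b : T) : ctxc Rl -> Rl a b ->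
  Rl (Fun f (pre ++ a :: post)) (Fun f (pre ++ b :: post)).
Proof.
  intros H Hab.
  assert (E1 : subterm_at (Fun f (pre ++ a :: post)) [length pre] = Some a).
  { simpl. rewrite nth_error_app_len. reflexivity. }
  specialize (H _ _ _ _ Hab E1). simpl in H. rewrite update_nth_app, replace_nil in H. exact H.
Qed.

Lemma fun_cong Rl f (ts ts' : list T) : ctxc Rl ->
  Forall2 (clos_refl_trans _ Rl) ts ts' -> clos_refl_trans _ Rl (Fun f ts) (Fun f ts').
Proof.
  intros H H2. change ts with ([] ++ ts). change ts' with ([] ++ ts').
  generalize (@nil T) as pre. induction H2; intros pre.
  - apply rt_refl.
  - eapply rt_trans.
    + apply (@fun_arg_step (clos_refl_trans _ Rl)); [apply rt_ctxc; auto|eauto].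
    + specialize (IHForall2 (pre ++ [y])). rewrite <- !app_assoc in IHForall2. exact IHForall2.
Qed.

Lemma Forall2_update_map {A B} (P : A -> A -> Prop) (f1 f2 : B -> A) g i (ls : list B) :
  (forall j l, nth_error ls j = Some l -> j <> i -> P (f1 l) (f2 l)) ->
  (forall l, nth_error ls i = Some l -> P (g (f1 l)) (f2 l)) ->
  Forall2 P (update_nth g i (map f1 ls)) (map f2 ls).
Proof.
  revert i; induction ls as [|b ls IH]; intros i H1 H2; simpl; [destruct i; constructor|].
  destruct i as [|i]; simpl.
  - constructor; [apply H2; auto|].
    assert (forall j l, nth_error ls j = Some l -> P (f1 l) (f2 l)) as H3
      by (intros j l Hj; apply (H1 (S j)); auto).
    clear -H3. induction ls; simpl; constructor.
    + apply (H3 0); auto.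
    + apply IHls. intros j l Hj; apply (H3 (S j)); auto.
  - constructor; [apply (H1 0); auto|].
    apply IH.
    + intros j l Hj Hji. apply (H1 (S j)); auto.
    + intros l Hl; apply H2; auto.
Qed.

Lemma Forall2_eq {A} (l1 l2 : list A) : Forall2 eq l1 l2 -> l1 = l2.
Proof. induction 1; subst; auto. Qed.

Lemma Forall2_map_same {A B} (P : A -> A -> Prop) (f1 f2 : B -> A) (ls : list B) :
  (forall l, In l ls -> P (f1 l) (f2 l)) -> Forall2 P (map f1 ls) (map f2 ls).
Proof. induction ls; simpl; constructor; auto. Qed.

Lemma subst_pointwise Rl (t : T) s1 s2 : ctxc Rl ->
  (forall x, clos_refl_trans _ Rl (s1 x) (s2 x)) ->
  clos_refl_trans _ Rl (app_subst s1 t) (app_subst s2 t).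
Proof.
  intros Hc Hx. induction t using term_ind2; simpl; auto.
  apply fun_cong; auto. apply Forall2_map_same. rewrite Forall_forall in H; auto.
Qed.

Lemma replace_var_pointwise Rl (l : T) p x s1 s2 : ctxc Rl ->
  subterm_at l p = Some (Var x) ->
  (forall y, clos_refl_trans _ Rl (s1 y) (s2 y)) ->
  clos_refl_trans _ Rl (replace_at (app_subst s1 l) p (s2 x)) (app_subst s2 l).
Proof.
  intros Hc. revert p. induction l using term_ind2; intros p Hp Hx.
  - destruct p; simpl in Hp; [|discriminate]. inversion Hp; subst.
    rewrite replace_nil; apply rt_refl.
  - destruct p as [|i p]; simpl in Hp; [discriminate|].
    destruct (nth_error ts i) eqn:E; [|discriminate].
    simpl. apply fun_cong; auto. apply Forall2_update_map.
    + intros j l Hj _. apply subst_pointwise; auto.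
    + intros l Hl. rewrite Hl in E; inversion E; subst.
      rewrite Forall_forall in H. apply H; auto. eapply nth_error_In; eauto.
Qed.

Definition upd (sg : subst) (x : var) (s : T) : subst :=
  fun y => if Nat.eq_dec y x then s else sg y.

Lemma replace_var_linear (l : T) p x sg s :
  subterm_at l p = Some (Var x) ->
  (forall q, subterm_at l q = Some (Var x) -> q = p) ->
  replace_at (app_subst sg l) p s = app_subst (upd sg x s) l.
Proof.
  revert p. induction l using term_ind2; intros p Hp Hu.
  - destruct p; simpl in Hp; [|discriminate]. inversion Hp; subst.
    rewrite replace_nil. unfold upd; simpl. destruct Nat.eq_dec; congruence.
  - destruct p as [|i p]; simpl in Hp; [discriminate|].
    destruct (nth_error ts i) eqn:E; [|discriminate].
    simpl. f_equal. apply Forall2_eq. apply Forall2_update_map.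
    + intros j l Hj Hji. apply subst_ext. intros y Hy. unfold upd.
      destruct Nat.eq_dec; auto. subst y. exfalso.
      destruct (occurs_pos _ _ Hy) as (q&Hq). assert (j :: q = i :: p); [|congruence].
      apply Hu. simpl. rewrite Hj; auto.
    + intros l Hl. rewrite Hl in E; inversion E; subst.
      rewrite Forall_forall in H. apply H; auto. eapply nth_error_In; eauto.
      intros q Hq. assert (i :: q = i :: p); [|congruence]. apply Hu; simpl; rewrite Hl; auto.
Qed.

End P3.

Section P4.
Context {F : Type}.
Notation T := (@term F).

Fixpoint vars (t : T) : list var :=
  match t with Var x => [x] | Fun _ ts => concat (map vars ts) end.

Lemma in_vars (t : T) x : In x (vars t) <-> occurs x t.
Proof.
  induction t using term_ind2; simpl.
  - split; [intros [->|[]]; constructor|intros H; inversion H; auto].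
  - rewrite in_concat. split.
    + intros (l&Hl&Hx). apply in_map_iff in Hl as (u&<-&Hu).
      rewrite Forall_forall in H. econstructor; eauto. apply H; auto.
    + intros Ho; inversion Ho; subst. rewrite Forall_forall in H.
      exists (vars t); split; [apply in_map; auto| apply H; auto].
Qed.

Definition eqns := list (T * T).
Definition unif (sg : subst) (E : eqns) := Forall (fun e => app_subst sg (fst e) = app_subst sg (snd e)) E.
Definition eqvars (E : eqns) := concat (map (fun e => vars (fst e) ++ vars (snd e)) E).
Definition nv (E : eqns) := length (nodup Nat.eq_dec (eqvars E)).
Definition esize (E : eqns) := list_sum (map (fun e => size (fst e) + size (snd e)) E).

Lemma nv_le E1 E2 : incl (eqvars E1) (eqvars E2) -> nv E1 <= nv E2.
Proof.
  intros H. unfold nv. apply NoDup_incl_length; [apply NoDup_nodup|].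
  intros y Hy. apply nodup_In. apply nodup_In in Hy. auto.
Qed.

Lemma nv_lt E1 E2 x : (forall y, In y (eqvars E1) -> In y (eqvars E2) /\ y <> x) ->
  In x (eqvars E2) -> nv E1 < nv E2.
Proof.
  intros H Hx. unfold nv.
  eapply Nat.le_lt_trans; [|apply (remove_length_lt Nat.eq_dec (nodup Nat.eq_dec (eqvars E2)) x)].
  - apply NoDup_incl_length; [apply NoDup_nodup|].
    intros y Hy. apply nodup_In in Hy. destruct (H y Hy). apply in_in_remove; auto. apply nodup_In; auto.
  - apply nodup_In; auto.
Qed.

Lemma size_occurs_lt (t : T) x sg : occurs x t -> t <> Var x -> size (sg x) < size (app_subst sg t).
Proof.
  intros Ho Hne. destruct (occurs_pos _ _ Ho) as (p&Hp).
  destruct p as [|i p]. { simpl in Hp; congruence. }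
  pose proof (subterm_at_subst _ _ _ sg Hp) as Hp2. clear Hp; rename Hp2 into Hp.
  apply size_subterm in Hp. destruct Hp as [_ Hp]. apply Hp; congruence.
Qed.

Definition is_mgu_l (sg : subst) (E : eqns) :=
  unif sg E /\ forall tau, unif tau E -> exists delta, forall x, tau x = app_subst delta (sg x).

Lemma unif_combine sg (ss ts : list T) : length ss = length ts ->
  (unif sg (combine ss ts) <-> map (app_subst sg) ss = map (app_subst sg) ts).
Proof.
  revert ts; induction ss; intros [|t ts] Hl; simpl in *; try discriminate.
  - split; auto; constructor.
  - unfold unif in *. rewrite Forall_cons_iff, IHss by congruence. simpl.
    split; [intros [-> ->]; auto|intros H; injection H; auto].
Qed.

Lemma esize_combine (ss ts : list T) : length ss = length ts ->
  esize (combine ss ts) = list_sum (map size ss) + list_sum (map size ts).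
Proof.
  revert ts; induction ss; intros [|t ts] Hl; simpl in *; try discriminate; auto.
  unfold esize in *; simpl. rewrite IHss by congruence. lia.
Qed.

Lemma eqvars_combine (ss ts : list T) y : In y (eqvars (combine ss ts)) ->
  In y (concat (map vars ss)) \/ In y (concat (map vars ts)).
Proof.
  revert ts; induction ss; intros [|t ts]; simpl; try tauto.
  unfold eqvars; simpl. rewrite !in_app_iff. intros [[H|H]|H]; auto.
  destruct (IHss ts H); auto.
Qed.

Lemma eqvars_cons e E y : In y (eqvars (e :: E)) <-> In y (vars (fst e)) \/ In y (vars (snd e)) \/ In y (eqvars E).
Proof. unfold eqvars; simpl; rewrite !in_app_iff; tauto. Qed.

Lemma eqvars_app E1 E2 y : In y (eqvars (E1 ++ E2)) <-> In y (eqvars E1) \/ In y (eqvars E2).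
Proof. unfold eqvars; rewrite map_app, concat_app, in_app_iff; tauto. Qed.

Lemma eqvars_map (E : eqns) f y : In y (eqvars (map (fun e => (f (fst e), f (snd e))) E)) ->
  exists e, In e E /\ (In y (vars (f (fst e))) \/ In y (vars (f (snd e)))).
Proof.
  induction E; simpl; [unfold eqvars; simpl; tauto|].
  rewrite eqvars_cons; simpl. intros [H|[H|H]]; eauto.
  destruct (IHE H) as (e&?&?); eauto.
Qed.

Lemma unif_map sg rho (E : eqns) : unif sg (map (fun e => (app_subst rho (fst e), app_subst rho (snd e))) E) <->
  unif (fun y => app_subst sg (rho y)) E.
Proof.
  unfold unif. rewrite Forall_map. simpl. split; apply Forall_impl; intros e; rewrite !subst_comp; auto.
Qed.

Definition elim_subst (x : var) (t : T) : subst := fun y => if Nat.eq_dec y x then t else Var y.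

Lemma mgu_exists_l : forall E, (exists th, unif th E) -> exists sg, is_mgu_l sg E.
Proof.
  assert (forall N M E, nv E < N -> esize E < M -> (exists th, unif th E) -> exists sg, is_mgu_l sg E)
    as Main.
  2:{ intros E. apply (Main (S (nv E)) (S (esize E))); lia. }
  induction N as [|N IHN]; [lia|].
  induction M as [|M IHM]; [lia|].
  intros E HN HM (th&Hth).
  destruct E as [|[a b] E].
  { exists (fun x => Var x). split; [constructor|]. intros tau _. exists tau. intros; reflexivity. }
  assert (Hvar : forall x t, (forall sg, unif sg ((a,b)::E) <-> unif sg ((Var x, t) :: E)) ->
            (forall y, In y (eqvars ((Var x, t) :: E)) <-> In y (eqvars ((a,b)::E))) ->
            esize ((Var x, t) :: E) = esize ((a,b) :: E) ->
            exists sg, is_mgu_l sg ((a,b)::E)).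
  { intros x t Heq Hv Hs.
    assert (Hth' : unif th ((Var x, t) :: E)) by (apply Heq; auto).
    assert (exists sg, is_mgu_l sg ((Var x, t) :: E)) as (sg&Hsg1&Hsg2).
    2:{ exists sg; split; [apply Heq; auto|intros tau Ht; apply Hsg2, Heq; auto]. }
    destruct (classic (t = Var x)) as [->|Hne].
    -
      assert (Hs2 : esize E < M).
      { assert (esize ((Var x, Var x) :: E) = 2 + esize E) by (unfold esize; simpl; lia). lia. }
      assert (Hn2 : nv E < S N).
      { eapply Nat.le_lt_trans; [|apply HN]. apply nv_le. intros y Hy. apply Hv. apply eqvars_cons; auto. }
      inversion Hth'; subst.
      destruct (IHM E Hn2 Hs2 (ex_intro _ th H2)) as (sg&Hs1&Hs2').
      exists sg. split; [constructor; auto|]. intros tau Ht; inversion Ht; auto.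
    - destruct (classic (occurs x t)) as [Ho|Hno].
      + exfalso. inversion Hth'; subst. simpl in H1.
        pose proof (size_occurs_lt _ _ th Ho Hne). rewrite <- H1 in H. lia.
      + set (rho := elim_subst x t).
        set (E' := map (fun e => (app_subst rho (fst e), app_subst rho (snd e))) E).
        assert (Hrt : app_subst rho t = t).
        { transitivity (app_subst (fun y => Var y) t); [|apply subst_id]. apply subst_ext. intros y Hy. unfold rho, elim_subst.
          destruct Nat.eq_dec; subst; tauto. }
        assert (Hn2 : nv E' < N).
        { assert (nv E' < nv ((a,b)::E)); [|lia].
          apply nv_lt with x.
          - intros y Hy. apply eqvars_map in Hy as (e&He&Hy).
            assert (Hy' : occurs y (app_subst rho (fst e)) \/ occurs y (app_subst rho (snd e)))
              by (rewrite <- !in_vars; tauto).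
            assert (forall u, occurs y (app_subst rho u) -> In u [fst e; snd e] ->
                      In y (eqvars ((a,b)::E)) /\ y <> x).
            { intros u Hu Hin. apply occurs_subst in Hu as (z&Hz1&Hz2).
              unfold rho, elim_subst in Hz2. destruct Nat.eq_dec.
              - subst z. split; [apply Hv, eqvars_cons; simpl; right; left; apply in_vars; auto|].
                intros ->; tauto.
              - inversion Hz2; subst. split; auto. apply Hv, eqvars_cons; right; right.
                unfold eqvars. apply in_concat. exists (vars (fst e) ++ vars (snd e)).
                split; [apply in_map_iff; exists e; split; auto|]. apply in_app_iff. destruct Hin as [<-|[<-|[]]];
                [left|right]; apply in_vars; auto. }
            destruct Hy'; [apply (H (fst e))|apply (H (snd e))]; simpl; auto.
          - apply Hv, eqvars_cons; simpl; auto. }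
        assert (HthE' : unif th E').
        { inversion Hth'; subst. apply unif_map. unfold unif in *.
          eapply Forall_impl; [|exact H2]. intros e He. simpl in *.
          assert (Hthr: forall u, app_subst th (app_subst rho u) = app_subst th u).
          { intro u; rewrite subst_comp; apply subst_ext; intros y _; unfold rho, elim_subst;
            destruct Nat.eq_dec; subst; auto. }
          rewrite <- !subst_comp, !Hthr; auto. }
        destruct (IHN (S (esize E')) E' Hn2 (Nat.lt_succ_diag_r _) (ex_intro _ th HthE')) as (s'&Hs1&Hs2).
        exists (fun y => app_subst s' (rho y)). split.
        * constructor.
          -- simpl. unfold rho at 1, elim_subst. destruct Nat.eq_dec; [|congruence].
             rewrite <- subst_comp, Hrt; auto.
          -- apply unif_map; auto.
        * intros tau Ht. inversion Ht; subst. simpl in H1.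
          assert (Hpt : forall y, tau y = app_subst tau (rho y)).
          { intros y; unfold rho, elim_subst; destruct Nat.eq_dec; subst; auto. }
          assert (HtE' : unif tau E').
          { apply unif_map. unfold unif in *. eapply Forall_impl; [|exact H2].
            intros e He; simpl in *.
            assert (Hthr: forall u, app_subst tau (app_subst rho u) = app_subst tau u).
            { intro u; rewrite subst_comp; apply subst_ext; intros z _; auto. }
            rewrite <- !subst_comp, !Hthr; auto. }
          destruct (Hs2 tau HtE') as (d&Hd). exists d. intros y.
          rewrite Hpt, subst_comp. apply subst_ext. intros z _; auto. }
  destruct a as [x|f ss]; [apply (Hvar x b); auto; reflexivity|].
  destruct b as [y|g ts].
  { apply (Hvar y (Fun f ss)).
    - intros sg; unfold unif; rewrite !Forall_cons_iff; simpl; split; intros [? ?]; auto.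
    - intros z; rewrite !eqvars_cons; simpl; tauto.
    - unfold esize; simpl; lia. }
  inversion Hth; subst. simpl in H1. injection H1 as <- Hm.
  assert (Hl : length ss = length ts) by (rewrite <- (length_map (app_subst th) ss), Hm, length_map; auto).
  set (E' := combine ss ts ++ E).
  assert (Heq : forall sg, unif sg E' <-> unif sg ((Fun f ss, Fun f ts) :: E)).
  { intros sg. unfold E', unif. rewrite Forall_app, Forall_cons_iff. fold (unif sg (combine ss ts)).
    rewrite unif_combine by auto. simpl. split; [intros [-> ?]; auto|intros [H ?]; injection H; auto]. }
  assert (Hs2 : esize E' < M).
  { unfold E'. unfold esize in *. rewrite map_app, list_sum_app. fold (esize (combine ss ts)).
    rewrite esize_combine by auto. simpl in HM. lia. }
  assert (Hn2 : nv E' < S N).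
  { eapply Nat.le_lt_trans; [|apply HN]. apply nv_le. intros z Hz.
    apply eqvars_app in Hz as [Hz|Hz]; apply eqvars_cons; [|auto].
    apply eqvars_combine in Hz as [Hz|Hz]; simpl; auto. }
  destruct (IHM E' Hn2 Hs2 (ex_intro _ th (proj2 (Heq th) Hth))) as (sg&Hs1&Hs3).
  exists sg; split; [apply Heq; auto|]. intros tau Ht; apply Hs3, Heq; auto.
Qed.

Lemma mgu_exists (s t : T) : (exists th, app_subst th s = app_subst th t) -> exists sg, is_mgu sg s t.
Proof.
  intros (th&Hth). destruct (@mgu_exists_l [(s,t)]) as (sg&H1&H2).
  - exists th; constructor; auto.
  - exists sg. split.
    + inversion H1; auto.
    + intros tau Ht; apply H2; constructor; auto.
Qed.

End P4.

Section P5.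
Context {F : Type}.
Notation T := (@term F).
Context (B gt R : @rel F).
Context (RO : reduction_order_compat B gt).

Lemma gt_irrefl (s : T) : ~ gt s s.
Proof. apply RO. Qed.
Lemma gt_trans (s t u : T) : gt s t -> gt t u -> gt s u.
Proof. apply RO. Qed.
Lemma gt_subst (s t : T) sg : gt s t -> gt (app_subst sg s) (app_subst sg t).
Proof. apply RO. Qed.
Lemma gt_compat (s s' t' t : T) : simB B s s' -> gt s' t' -> simB B t' t -> gt s t.
Proof. apply RO. Qed.
Lemma gt_ctx (u s t : T) p : subterm_at u p = Some s -> gt s t -> gt u (replace_at u p t).
Proof.
  intros Hp H. destruct RO as (_&_&_&Hc&_).
  pose proof (Hc s t u p ltac:(congruence) H) as H'. rewrite (replace_at_id _ _ _ Hp) in H'. exact H'.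
Qed.

Lemma simB_refl (s : T) : simB B s s.
Proof. apply rt_refl. Qed.
Lemma simB_sym (s t : T) : simB B s t -> simB B t s.
Proof. apply conv_sym. Qed.
Lemma simB_trans (s t u : T) : simB B s t -> simB B t u -> simB B s u.
Proof. apply rt_trans. Qed.

Lemma gt_sim_r (w z z' : T) : gt w z -> simB B z z' -> gt w z'.
Proof. intros; eapply gt_compat; eauto using simB_refl. Qed.
Lemma gt_sim_l (w v x : T) : simB B v w -> gt v x -> gt w x.
Proof. intros; eapply gt_compat; [apply simB_sym; eauto|eauto|apply simB_refl]. Qed.

Lemma no_chain (g : nat -> T) : ~ (forall k, gt (g k) (g (S k))).
Proof.
  intros H. destruct RO as (_&_&Hwf&_).
  assert (forall t, Acc (fun t s => gt s t) t -> forall k, g k <> t).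
  { intros t Ha. induction Ha as [t _ IH]. intros k Hk. subst t.
    apply (IH (g (S k)) (H k) (S k)); auto. }
  apply (H0 (g 0) (Hwf (g 0)) 0); auto.
Qed.

Lemma pump (a c : T) q sg : subterm_at c q <> None -> gt a (replace_at c q (app_subst sg a)) -> False.
Proof.
  intros Hq H.
  set (h := fix h k := match k with 0 => a | S k => replace_at c q (app_subst sg (h k)) end).
  apply (no_chain h). intros k. induction k.
  - exact H.
  - simpl. simpl in IHk. change (gt (h (S k)) (h (S (S k)))).
    pose proof (gt_ctx (replace_at c q (app_subst sg (h k))) _ _ q (subterm_replace_same _ _ _ Hq)
      (gt_subst _ _ sg IHk)) as G. rewrite replace_replace_same in G. exact G.
Qed.

Lemma gt_vars (l r : T) x : gt l r -> occurs x r -> occurs x l.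
Proof.
  intros H Hr. apply NNPP; intros Hl.
  set (sg := fun y => if Nat.eq_dec y x then l else Var y).
  assert (Hls : app_subst sg l = l).
  { transitivity (app_subst (fun y => Var y) l); [|apply subst_id]. apply subst_ext.
    intros y Hy; unfold sg; destruct Nat.eq_dec; subst; tauto. }
  destruct (occurs_pos _ _ Hr) as (q&Hq).
  assert (Hq2 : subterm_at (app_subst sg r) q = Some l).
  { rewrite (subterm_at_subst _ _ _ sg Hq). simpl. unfold sg; destruct Nat.eq_dec; congruence. }
  apply (pump l (app_subst sg r) q (fun y => Var y)); [congruence|].
  rewrite subst_id, (replace_at_id _ _ _ Hq2). rewrite <- Hls at 1. apply gt_subst; auto.
Qed.

Lemma gt_rule_nf (l r : T) q sg : gt l r -> subterm_at r q = Some (app_subst sg l) -> False.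
Proof.
  intros H Hq. apply (pump l r q sg); [congruence|]. rewrite (replace_at_id _ _ _ Hq); auto.
Qed.

Context (HR : forall l r, R l r -> gt l r).

Lemma rstep_gt (s t : T) : rstep R s t -> gt s t.
Proof.
  intros (l&r&p&sg&H1&H2&->). apply gt_ctx with (app_subst sg l); auto. apply gt_subst; auto.
Qed.

Lemma rsteps_ge (s t : T) : rsteps R s t -> s = t \/ gt s t.
Proof.
  induction 1; auto using rstep_gt.
  destruct IHclos_refl_trans1 as [->|H1]; destruct IHclos_refl_trans2 as [->|H2]; auto.
  right; eapply gt_trans; eauto.
Qed.

Lemma nf_exists (t : T) : exists n, rsteps R t n /\ normal_form R n.
Proof.
  destruct RO as (_&_&Hwf&_). induction (Hwf t) as [t _ IH].
  destruct (classic (normal_form R t)) as [Hn|Hn].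
  - exists t; split; auto. apply rt_refl.
  - apply NNPP in Hn. destruct Hn as (u&Hu).
    destruct (IH u (rstep_gt _ _ Hu)) as (n&H1&H2). exists n; split; auto.
    eapply rt_trans; [apply rt_step|]; eauto.
Qed.

Lemma nf_rsteps (s t : T) : normal_form R s -> rsteps R s t -> s = t.
Proof.
  intros Hn H. induction H; auto.
  - exfalso; apply Hn; eauto.
  - specialize (IHclos_refl_trans1 Hn); subst. auto.
Qed.

Notation J := (joinable_mod R B).
Lemma rsteps_trans (x y z : T) : rsteps R x y -> rsteps R y z -> rsteps R x z.
Proof. apply rt_trans. Qed.
Lemma rsteps_step (x y : T) : rstep R x y -> rsteps R x y.
Proof. apply rt_step. Qed.
Lemma rsteps_refl (x : T) : rsteps R x x.
Proof. apply rt_refl. Qed.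
Hint Resolve rsteps_step rsteps_refl simB_refl : core.

Lemma J_sym (x y : T) : J x y -> J y x.
Proof. intros (a&b&H1&H2&H3). exists b, a; auto using simB_sym. Qed.

Lemma J_refl (x : T) : J x x.
Proof. exists x, x; split; [apply rt_refl|split; [apply simB_refl|apply rt_refl]]. Qed.

Lemma J_rsteps (x y : T) : rsteps R x y -> J x y.
Proof. intros; exists y, y; auto. Qed.

Lemma J_sim (x y : T) : simB B x y -> J x y.
Proof. intros; exists x, y; split; [apply rt_refl|split; auto; apply rt_refl]. Qed.

Definition Pw (u : T) := forall u1 u2 n1 n2, simB B u1 u -> simB B u2 u -> rsteps R u1 n1 ->
  rsteps R u2 n2 -> normal_form R n1 -> normal_form R n2 -> simB B n1 n2.

Definition le_w (w z : T) := gt w z \/ simB B z w.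

Lemma below_rsteps (w y b : T) : gt w y -> rsteps R y b -> gt w b.
Proof. intros H1 H2. destruct (rsteps_ge _ _ H2) as [<-|H]; auto. eapply gt_trans; eauto. Qed.

Lemma trans_below (w x y z : T) : (forall u, gt w u -> Pw u) -> J x y -> J y z -> gt w y -> J x z.
Proof.
  intros IH (a&b&Ha&Hab&Hb) (c&d&Hc&Hcd&Hd) Hy.
  assert (gb : gt w b) by (apply below_rsteps with y; auto).
  assert (gc : gt w c) by (apply below_rsteps with y; auto).
  assert (ga : gt w a) by (apply gt_sim_r with b; auto using simB_sym).
  assert (gd : gt w d) by (apply gt_sim_r with c; auto).
  destruct (nf_exists a) as (na&Hna1&Hna2).
  destruct (nf_exists b) as (nb&Hnb1&Hnb2).
  destruct (nf_exists c) as (nc&Hnc1&Hnc2).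
  destruct (nf_exists d) as (nd&Hnd1&Hnd2).
  assert (simB B na nb) by (apply (IH b gb a b); auto using simB_refl).
  assert (simB B nb nc) by (apply (IH y Hy y y); auto using simB_refl; eauto using rsteps_trans).
  assert (simB B nc nd) by (apply (IH c gc c d); auto using simB_refl, simB_sym).
  exists na, nd. split; [eapply rt_trans; eauto|]. split; [|eapply rt_trans; eauto].
  eauto using simB_trans.
Qed.

Definition LOC (w : T) := forall v, simB B v w ->
  (forall x y, rstep R v x -> rstep R v y -> J x y) /\
  (forall x y, rstep R v x -> sstep B v y -> J x y).

Lemma P_of_local (w : T) : (forall u, gt w u -> Pw u) -> LOC w -> Pw w.
Proof.
  intros IH HL.
  assert (S1 : forall z n n', simB B z w -> rsteps R z n -> rsteps R z n' ->
             normal_form R n -> normal_form R n' -> simB B n n').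
  { intros z n n' Hz H1 H2 N1 N2.
    destruct (classic (normal_form R z)) as [Nz|Nz].
    - rewrite <- (nf_rsteps _ _ Nz H1), <- (nf_rsteps _ _ Nz H2). apply simB_refl.
    - assert (Hstep : forall m, rsteps R z m -> normal_form R m -> exists z1, rstep R z z1 /\ rsteps R z1 m).
      { intros m Hm Nm. apply clos_rt_rt1n in Hm. inversion Hm; subst.
        - contradiction.
        - exists y; split; auto. apply clos_rt1n_rt; auto. }
      destruct (Hstep n H1 N1) as (z1&Hz1&Hz1n).
      destruct (Hstep n' H2 N2) as (z2&Hz2&Hz2n).
      destruct (proj1 (HL z Hz) z1 z2 Hz1 Hz2) as (a&b&Ha&Hab&Hb).
      assert (g1 : gt w z1) by (apply gt_sim_l with z; auto using rstep_gt).
      assert (g2 : gt w z2) by (apply gt_sim_l with z; auto using rstep_gt).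
      assert (ga : gt w a) by (apply below_rsteps with z1; auto).
      destruct (nf_exists a) as (na&Hna1&Hna2).
      destruct (nf_exists b) as (nb&Hnb1&Hnb2).
      assert (simB B n na) by (apply (IH z1 g1 z1 z1); auto using simB_refl; eauto using rsteps_trans).
      assert (simB B na nb) by (apply (IH a ga a b); auto using simB_refl, simB_sym).
      assert (simB B nb n') by (apply (IH z2 g2 z2 z2); auto using simB_refl; eauto using rsteps_trans).
      eauto using simB_trans. }
  assert (S2 : forall z z' n n', simB B z w -> sstep B z z' -> rsteps R z n -> rsteps R z' n' ->
             normal_form R n -> normal_form R n' -> simB B n n').
  { assert (S2' : forall z z' n n', simB B z w -> sstep B z z' -> rsteps R z n -> rsteps R z' n' ->
             normal_form R n -> normal_form R n' -> ~ normal_form R z -> simB B n n').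
    { intros z z' n n' Hz Hzz' H1 H2 N1 N2 Nz. apply NNPP in Nz. destruct Nz as (z1&Hz1).
      assert (Hz' : simB B z' w).
      { eapply simB_trans; [|exact Hz]. apply simB_sym, rt_step; auto. }
      destruct (proj2 (HL z Hz) z1 z' Hz1 Hzz') as (a&b&Ha&Hab&Hb).
      assert (g1 : gt w z1) by (apply gt_sim_l with z; auto using rstep_gt).
      assert (ga : gt w a) by (apply below_rsteps with z1; auto).
      destruct (nf_exists a) as (na&Hna1&Hna2).
      destruct (nf_exists b) as (nb&Hnb1&Hnb2).
      destruct (nf_exists z1) as (n1&Hn11&Hn12).
      assert (simB B n n1).
      { apply (S1 z); auto. eapply rt_trans; [apply rt_step|]; eauto. }
      assert (simB B n1 na) by (apply (IH z1 g1 z1 z1); auto using simB_refl; eauto using rsteps_trans).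
      assert (simB B na nb) by (apply (IH a ga a b); auto using simB_refl, simB_sym).
      assert (simB B nb n') by (apply (S1 z'); auto; eauto using rsteps_trans).
      eauto using simB_trans. }
    intros z z' n n' Hz Hzz' H1 H2 N1 N2.
    destruct (classic (normal_form R z)) as [Nz|Nz]; [|apply (S2' z z' n n'); auto].
    destruct (classic (normal_form R z')) as [Nz'|Nz'].
    - rewrite <- (nf_rsteps _ _ Nz H1), <- (nf_rsteps _ _ Nz' H2). apply rt_step; auto.
    - apply simB_sym. apply (S2' z' z n' n); auto using sstep_sym.
      eapply simB_trans; [|exact Hz]. apply simB_sym, rt_step; auto. }
  intros u1 u2 n1 n2 H1 H2 Hr1 Hr2 N1 N2.
  assert (Hc : simB B u1 u2) by eauto using simB_trans, simB_sym.
  clear H2. revert n1 n2 Hr1 Hr2 N1 N2. apply clos_rt_rt1n in Hc. induction Hc; intros n1 n2 Hr1 Hr2 N1 N2.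
  - eapply S1; eauto.
  - assert (Hy : simB B y w).
    { eapply simB_trans; [|exact H1]. apply simB_sym, rt_step; auto. }
    destruct (nf_exists y) as (ny&Hny1&Hny2).
    apply simB_trans with ny; [apply (S2 x y n1 ny); auto|]. apply IHHc; auto.
Qed.

Lemma CR_of_P : (forall u, Pw u) -> church_rosser_mod R B.
Proof.
  intros HP.
  assert (Hc : forall s t, conv (union R B) s t -> forall ns nt, rsteps R s ns -> rsteps R t nt ->
            normal_form R ns -> normal_form R nt -> simB B ns nt).
  { intros s t H. induction H as [s t H|s|s t u H1 IH1 H2 IH2]; intros ns nt Hs Ht Ns Nt.
    - assert (forall s t ns nt, rstep (union R B) s t -> rsteps R s ns -> rsteps R t nt ->
                normal_form R ns -> normal_form R nt -> simB B ns nt).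
      { clear -HP HR RO. intros s t ns nt H Hs Ht Ns Nt. apply rstep_union in H as [H|H].
        - apply (HP s s s); auto using simB_refl. eapply rt_trans; [apply rt_step|]; eauto.
        - apply (HP s s t); auto using simB_refl. apply simB_sym, rt_step; left; auto. }
      destruct H; [eauto|apply simB_sym; eauto].
    - apply (HP s s s); auto using simB_refl.
    - destruct (nf_exists t) as (n&Hn1&Hn2). eauto using simB_trans. }
  intros s t H. destruct (nf_exists s) as (ns&H1&H2). destruct (nf_exists t) as (nt&H3&H4).
  exists ns, nt; split; [auto|split; [apply (Hc s t H); auto|auto]].
Qed.

End P5.

Section P6.
Context {F : Type}.
Notation T := (@term F).
Context (B gt E : @rel F) (Es Rs : nat -> @rel F) (n : nat).
Context (RO : reduction_order_compat B gt).
Context (Hrun : is_run gt B E Es Rs n).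
Context (HEn : seteq (Es n) empty_rel).

Lemma Rs_gt : forall i, i <= n -> forall l r, Rs i l r -> gt l r.
Proof.
  destruct Hrun as (_&H0&Hst).
  induction i as [|i IH]; intros Hi l r Hlr.
  - apply H0 in Hlr; contradiction.
  - assert (IH' := IH ltac:(lia)). specialize (Hst i ltac:(lia)).
    destruct Hst as [D|[D|[D|[D|[D|D]]]]].
    + destruct D as (s&t&_&_&HR). apply IH', HR; auto.
    + destruct D as (s&t&Hg&_&HR). apply HR in Hlr as [H|[-> ->]]; auto.
    + destruct D as (s&t&_&_&HR). apply IH', HR; auto.
    + destruct D as (E'&s&t&u&_&_&_&HR). apply IH', HR; auto.
    + destruct D as (s&t&u&[HR _]&_&_). apply IH', HR; left; auto.
    + destruct D as (R'&s&t&u&[HR _]&Htu&HR1&_).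
      assert (HR' : forall a b, R' a b -> gt a b) by (intros a b Hab; apply IH', HR; left; auto).
      apply HR1 in Hlr as [H|[-> ->]]; auto.
      eapply gt_trans; [exact RO| |].
      * apply IH', HR; right; auto.
      * apply (rstep_gt B gt R' RO HR'); auto.
Qed.

Definition R := Rs n.
Lemma R_gt : forall l r, R l r -> gt l r.
Proof. apply Rs_gt; auto. Qed.

Notation J := (joinable_mod R B).

Lemma le_w_gt (w x y : T) : le_w B gt w x -> gt x y -> gt w y.
Proof.
  intros [H|H] H2.
  - eapply gt_trans; eauto.
  - eapply gt_sim_l; eauto.
Qed.

Lemma rstep_rule (S : @rel F) l r (x : T) p sg : S l r -> subterm_at x p = Some (app_subst sg l) ->
  rstep S x (replace_at x p (app_subst sg r)).
Proof. intros; exists l, r, p, sg; auto. Qed.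

Lemma rstep_rule_rev (S : @rel F) l r (x : T) p sg : S r l -> subterm_at x p = Some (app_subst sg l) ->
  rstep S (replace_at x p (app_subst sg r)) x.
Proof.
  intros H Hp. exists r, l, p, sg. split; auto. split.
  - apply subterm_replace_same; congruence.
  - rewrite replace_replace_same, (replace_at_id _ _ _ Hp); auto.
Qed.

Lemma inst_step (S : @rel F) (s u x : T) p sg : rstep S s u -> subterm_at x p = Some (app_subst sg s) ->
  rstep S x (replace_at x p (app_subst sg u)).
Proof.
  intros H Hp. apply (rstep_ctxc S x (app_subst sg s)); auto. apply rstep_substc; auto.
Qed.

Definition Inv (w : T) (i : nat) := forall x y, sstep (union (Es i) (Rs i)) x y -> le_w B gt w x -> le_w B gt w y -> J x y.

Lemma Inv_one (w : T) (i : nat) : (forall x y, rstep (union (Es i) (Rs i)) x y -> le_w B gt w x -> le_w B gt w y -> J x y) -> Inv w i.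
Proof.
  intros H x y [Hs|Hs] Hx Hy; [eauto|]. apply J_sym. eauto.
Qed.

Lemma Inv_mono (w : T) i j : (forall a b, union (Es i) (Rs i) a b -> pm (union (Es j) (Rs j)) a b) ->
  Inv w j -> Inv w i.
Proof.
  intros Hs HI. apply Inv_one. intros x y Hxy Hx Hy. apply HI; auto.
  apply rstep_pm. eapply rstep_mono; eauto.
Qed.

Lemma Inv_all (w : T) : (forall u, gt w u -> Pw B R u) -> forall i, i <= n -> Inv w i.
Proof.
  intros IH.
  assert (HRg := R_gt).
  assert (Htr : forall x y z, J x y -> J y z -> gt w y -> J x z).
  { intros; eapply (trans_below B gt R RO HRg w x y z); eauto. }
  assert (HJs : forall x y, J x y -> J y x) by (intros; apply J_sym; auto).
  assert (HJr : forall x y, rsteps R x y -> J x y) by (intros; apply J_rsteps; auto).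
  assert (Main : forall k, k <= n -> Inv w (n - k)).
  2:{ intros i Hi. replace i with (n - (n - i)) by lia. apply Main; lia. }
  destruct Hrun as (_&_&Hst).
  induction k as [|k IHk]; intros Hk.
  - replace (n - 0) with n by lia. apply Inv_one. intros x y Hxy _ _.
    apply rstep_union in Hxy as [H|H].
    + destruct H as (l&r&p&sg&Hlr&_). apply HEn in Hlr; contradiction.
    + apply HJr, rt_step; auto.
  - set (i := n - S k). assert (Hi : i < n) by lia.
    assert (Hi1 : S i = n - k) by lia.
    specialize (IHk ltac:(lia)). rewrite <- Hi1 in IHk.
    assert (Hgi : forall l r, Rs i l r -> gt l r) by (apply Rs_gt; lia).
    assert (Hgi1 : forall l r, Rs (S i) l r -> gt l r) by (apply Rs_gt; lia).
    assert (HI1 : forall x y (Sr : @rel F), (forall a b, Sr a b -> union (Es (S i)) (Rs (S i)) a b) ->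
              rstep Sr x y -> le_w B gt w x -> le_w B gt w y -> J x y).
    { intros x y Sr HS Hxy Hx Hy. apply IHk; auto. left. eapply rstep_mono; eauto. }
    specialize (Hst i Hi).
    destruct Hst as [D|[D|[D|[D|[D|D]]]]].
    +
      destruct D as (s&t&_&HE&HR). apply (Inv_mono w i (S i)); auto.
      intros a b [H|H]; left; [left; apply HE; left|right; apply HR]; auto.
    +
      destruct D as (s&t&_&HE&HR). apply (Inv_mono w i (S i)); auto.
      intros a b [H|H].
      * destruct HE as [[HE _]|[HE _]]; apply HE in H as [H|[-> ->]].
        -- left; left; auto.
        -- left; right; apply HR; right; auto.
        -- left; left; auto.
        -- right; right; apply HR; right; auto.
      * left; right; apply HR; left; auto.
    +
      destruct D as (s&t&Hst&[HE _]&HR). apply Inv_one. intros x y Hxy Hx Hy.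
      destruct Hxy as (l&r&p&sg&[Hlr|Hlr]&Hp&->).
      * apply HE in Hlr as [Hlr|[-> ->]].
        -- apply (HI1 _ _ (Es (S i))); auto; [intros; left; auto|]. eapply rstep_rule; eauto.
        -- apply J_sim. apply (conv_ctxc B x (app_subst sg s)); auto. apply conv_substc; auto.
      * apply (HI1 _ _ (Rs (S i))); auto; [intros; right; auto|]. eapply rstep_rule; eauto. apply HR; auto.
    +
      destruct D as (E'&s&t&u&HE&Hsu&HE1&HR).
      assert (HEE : forall a b, Es i a b -> Es (S i) a b \/ (a = s /\ b = t) \/ (a = t /\ b = s)).
      { intros a b H. destruct HE as [[HE _]|[HE _]]; apply HE in H as [H|[-> ->]]; auto;
        left; apply HE1; left; auto. }
      apply Inv_one. intros x y Hxy Hx Hy.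
      destruct Hxy as (l&r&p&sg&[Hlr|Hlr]&Hp&->).
      * apply HEE in Hlr as [Hlr|[[-> ->]|[-> ->]]].
        -- apply (HI1 _ _ (Es (S i))); auto; [intros; left; auto|]. eapply rstep_rule; eauto.
        -- set (x' := replace_at x p (app_subst sg u)).
           assert (Hxx' : rstep (Rs i) x x') by (eapply inst_step; eauto).
           assert (gx' : gt w x') by (apply le_w_gt with x; [exact Hx| apply (rstep_gt B gt (Rs i) RO Hgi); exact Hxx']).
           assert (J1 : J x x') by (apply (HI1 _ _ (Rs i)); auto; [intros; right; apply HR; auto|left; auto]).
           refine (Htr _ x' _ J1 _ gx').
              apply (HI1 _ _ (Es (S i))); auto; [intros; left; auto| |left; auto].
              unfold x'. rewrite <- (replace_replace_same x (app_subst sg u) (app_subst sg t) p).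
              eapply rstep_rule; [apply HE1; right; auto|]. apply subterm_replace_same; congruence.
        -- set (y := replace_at x p (app_subst sg s)).
           set (y' := replace_at x p (app_subst sg u)).
           assert (Hyy' : rstep (Rs i) y y').
           { unfold y'. rewrite <- (replace_replace_same x (app_subst sg s) (app_subst sg u) p).
             eapply inst_step; eauto. apply subterm_replace_same; congruence. }
           assert (gy' : gt w y') by (apply le_w_gt with y; [exact Hy| apply (rstep_gt B gt (Rs i) RO Hgi); exact Hyy']).
           assert (J1 : J y y') by (apply (HI1 _ _ (Rs i)); auto; [intros; right; apply HR; auto|left; auto]).
           apply HJs. refine (Htr _ y' _ J1 _ gy').
              apply (HI1 _ _ (Es (S i))); auto; [intros; left; auto| |left; auto].
              replace x with (replace_at y' p (app_subst sg t)).
              { eapply rstep_rule; [apply HE1; right; auto|]. apply subterm_replace_same; congruence. }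
              unfold y'. rewrite replace_replace_same. apply replace_at_id; auto.
      * apply (HI1 _ _ (Rs (S i))); auto; [intros; right; auto|]. eapply rstep_rule; eauto. apply HR; auto.
    +
      destruct D as (s&t&u&[HR _]&Hsu&HE1).
      apply Inv_one. intros x y Hxy Hx Hy.
      destruct Hxy as (l&r&p&sg&[Hlr|Hlr]&Hp&->).
      * apply (HI1 _ _ (Es (S i))); auto; [intros; left; auto|]. eapply rstep_rule; eauto. apply HE1; left; auto.
      * apply HR in Hlr as [Hlr|[-> ->]].
        -- apply (HI1 _ _ (Rs (S i))); auto; [intros; right; auto|]. eapply rstep_rule; eauto.
        -- set (x' := replace_at x p (app_subst sg u)).
           assert (Hxx' : rstep (Rs (S i)) x x') by (eapply inst_step; eauto).
           assert (gx' : gt w x') by (apply le_w_gt with x; [exact Hx| apply (rstep_gt B gt (Rs (S i)) RO Hgi1); exact Hxx']).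
           assert (J1 : J x x') by (apply (HI1 _ _ (Rs (S i))); auto; [intros; right; auto|left; auto]).
           refine (Htr _ x' _ J1 _ gx').
              apply (HI1 _ _ (Es (S i))); auto; [intros; left; auto| |left; auto].
              unfold x'. rewrite <- (replace_replace_same x (app_subst sg u) (app_subst sg t) p).
              eapply rstep_rule; [apply HE1; right; auto|]. apply subterm_replace_same; congruence.
    +
      destruct D as (R'&s&t&u&[HR _]&Htu&HR1&HE1).
      apply Inv_one. intros x y Hxy Hx Hy.
      destruct Hxy as (l&r&p&sg&[Hlr|Hlr]&Hp&->).
      * apply (HI1 _ _ (Es i)); auto; [intros; left; apply HE1; auto|]. eapply rstep_rule; eauto.
      * apply HR in Hlr as [Hlr|[-> ->]].
        -- apply (HI1 _ _ R'); auto; [intros; right; apply HR1; left; auto|]. eapply rstep_rule; eauto.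
        -- set (z := replace_at x p (app_subst sg u)).
           assert (Hxz : rstep (Rs (S i)) x z) by (eapply rstep_rule; eauto; apply HR1; right; auto).
           assert (Hyz : rstep (Rs (S i)) (replace_at x p (app_subst sg t)) z).
           { unfold z. rewrite <- (replace_replace_same x (app_subst sg t) (app_subst sg u) p).
             eapply inst_step; [|apply subterm_replace_same; congruence].
             eapply rstep_mono; [|exact Htu]. intros; apply HR1; left; auto. }
           assert (gz : gt w z) by (apply le_w_gt with x; [exact Hx| apply (rstep_gt B gt (Rs (S i)) RO Hgi1); exact Hxz]).
           assert (J1 : J x z) by (apply (HI1 _ _ (Rs (S i))); auto; [intros; right; auto|left; auto]).
           assert (J2 : J (replace_at x p (app_subst sg t)) z) by (apply (HI1 _ _ (Rs (S i))); auto; [intros; right; auto|left; auto]).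
           exact (Htr _ z _ J1 (HJs _ _ J2) gz).
Qed.

End P6.

Section P7.
Context {F : Type}.
Notation T := (@term F).

Definition swapv (N0 : nat) (x : var) : var :=
  if x <? N0 then x + N0 else if x <? N0 + N0 then x - N0 else x.

Lemma swapv_inv N0 x : swapv N0 (swapv N0 x) = x.
Proof.
  unfold swapv. destruct (Nat.ltb_spec x N0).
  - destruct (Nat.ltb_spec (x + N0) N0); [lia|]. destruct (Nat.ltb_spec (x + N0) (N0 + N0)); lia.
  - destruct (Nat.ltb_spec x (N0 + N0)).
    + destruct (Nat.ltb_spec (x - N0) N0); lia.
    + destruct (Nat.ltb_spec x N0); [lia|]. destruct (Nat.ltb_spec x (N0 + N0)); lia.
Qed.

Lemma swapv_lt N0 x : x < N0 -> swapv N0 x = x + N0.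
Proof. unfold swapv; destruct (Nat.ltb_spec x N0); lia. Qed.

Definition ren (f : var -> var) : @subst F := fun x => Var (f x).

Lemma var_bound (ts : list T) : exists N0, forall x t, In t ts -> occurs x t -> x < N0.
Proof.
  exists (S (list_max (concat (map vars ts)))). intros x t Ht Hx.
  assert (x <= list_max (concat (map vars ts))); [|lia].
  assert (Hf := proj1 (list_max_le (concat (map vars ts)) _) (le_n _)).
  rewrite Forall_forall in Hf. apply Hf. apply in_concat. exists (vars t).
  split; [apply in_map; auto|apply in_vars; auto].
Qed.

Lemma J_inst (R B : @rel F) (s t v : T) po dl : subterm_at v po <> None -> joinable_mod R B s t ->
  joinable_mod R B (replace_at v po (app_subst dl s)) (replace_at v po (app_subst dl t)).
Proof.
  intros Hv (a&b&Ha&Hab&Hb).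
  exists (replace_at v po (app_subst dl a)), (replace_at v po (app_subst dl b)).
  split; [|split].
  - apply ctxc'; auto. apply rsteps_ctxc. apply rsteps_substc; auto.
  - apply ctxc'; auto. apply conv_ctxc. apply conv_substc; auto.
  - apply ctxc'; auto. apply rsteps_ctxc. apply rsteps_substc; auto.
Qed.

Lemma sstep_inst (E : @rel F) (s t v : T) po dl : subterm_at v po <> None -> sstep E s t ->
  sstep E (replace_at v po (app_subst dl s)) (replace_at v po (app_subst dl t)).
Proof.
  intros Hv H. apply ctxc'; auto. apply sstep_ctxc. apply sstep_substc; auto.
Qed.

End P7.

Section P8.
Context {F : Type}.
Notation T := (@term F).
Context (B gt E : @rel F) (Es Rs : nat -> @rel F) (n : nat).
Context (RO : reduction_order_compat B gt).
Context (Hrun : is_run gt B E Es Rs n).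
Context (HEn : seteq (Es n) empty_rel).
Context (HB : var_preserving B).
Context (Hfair : fair B Es Rs n).

Notation Rn := (Rs n).
Notation J := (joinable_mod (Rs n) B).

Lemma HRg : forall l r, Rn l r -> gt l r.
Proof. apply (Rs_gt B gt E Es Rs n RO Hrun); auto. Qed.

Lemma le_w_res (w v : T) (S : @rel F) l r p s : simB B v w -> (S = Rn \/ S = pm B) -> S l r ->
  subterm_at v p = Some (app_subst s l) -> le_w B gt w (replace_at v p (app_subst s r)).
Proof.
  intros Hv HS Hlr Hp. assert (Hst : rstep S v (replace_at v p (app_subst s r))) by (exists l, r, p, s; auto).
  destruct HS as [->| ->].
  - left. apply (gt_sim_l B gt RO w v); auto. apply (rstep_gt B gt Rn RO HRg); auto.
  - right. eapply simB_trans; [|exact Hv]. apply simB_sym. apply rt_step. apply rstep_pm; auto.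
Qed.

Lemma outer_vars (S : @rel F) lo ro : (S = Rn \/ S = pm B) -> S lo ro -> forall x, occurs x ro -> occurs x lo.
Proof.
  intros [->| ->] H x Hx.
  - apply (gt_vars B gt RO lo ro x); auto. apply HRg; auto.
  - destruct H as [H|H]; apply (HB _ _ H); auto.
Qed.

Lemma rstep_rep (S : @rel F) l r (v : T) po s : subterm_at v po <> None -> S l r ->
  rstep S (replace_at v po (app_subst s l)) (replace_at v po (app_subst s r)).
Proof.
  intros Hv H. exists l, r, po, s. split; auto. split.
  - apply subterm_replace_same; auto.
  - rewrite replace_replace_same; auto.
Qed.

Definition PairOK (w : T) (N : nat) := forall (v : T), simB B v w ->
  forall l1 r1 p1 s1 (S2 : @rel F) l2 r2 p2 s2, Rn l1 r1 -> (S2 = Rn \/ S2 = pm B) -> S2 l2 r2 ->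
  subterm_at v p1 = Some (app_subst s1 l1) -> subterm_at v p2 = Some (app_subst s2 l2) ->
  min (size (app_subst s1 l1)) (size (app_subst s2 l2)) < N ->
  J (replace_at v p1 (app_subst s1 r1)) (replace_at v p2 (app_subst s2 r2)).

Section W.
Context (w : T) (IH : forall u, gt w u -> Pw B Rn u).

Lemma Jtrans (x y z : T) : J x y -> J y z -> gt w y -> J x z.
Proof. intros; apply (trans_below B gt Rn RO HRg w x y z IH); auto. Qed.

Lemma nest_var (v : T) (So Si : @rel F) lo ro po so li ri q1 q2 si x :
  So lo ro -> Si li ri -> ((So = Rn /\ Si = Rn) \/ (So = Rn /\ Si = pm B) \/ (So = pm B /\ Si = Rn)) ->
  subterm_at v po = Some (app_subst so lo) -> subterm_at lo q1 = Some (Var x) ->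
  subterm_at (so x) q2 = Some (app_subst si li) ->
  J (replace_at v (po ++ q1 ++ q2) (app_subst si ri)) (replace_at v po (app_subst so ro)).
Proof.
  intros Hlo Hli HSS Hpo Hq1 Hq2.
  set (so' := upd so x (replace_at (so x) q2 (app_subst si ri))).
  assert (Hso'x : so' x = replace_at (so x) q2 (app_subst si ri)).
  { unfold so', upd. destruct Nat.eq_dec; congruence. }
  assert (Hso'y : forall y, y <> x -> so' y = so y).
  { intros y Hy; unfold so', upd. destruct Nat.eq_dec; congruence. }
  assert (Hsx : rstep Si (so x) (so' x)).
  { rewrite Hso'x. exists li, ri, q2, si; auto. }
  assert (Hq1s : subterm_at (app_subst so lo) q1 = Some (so x)).
  { apply (subterm_at_subst lo (Var x) q1 so Hq1). }
  assert (Hxi : replace_at v (po ++ q1 ++ q2) (app_subst si ri) =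
                replace_at v po (replace_at (app_subst so lo) q1 (so' x))).
  { rewrite (replace_at_app v (app_subst so lo) _ po (q1 ++ q2) Hpo).
    rewrite (replace_at_app _ (so x) _ q1 q2 Hq1s). rewrite Hso'x. reflexivity. }
  rewrite Hxi. clear Hxi.
  assert (Hv : subterm_at v po <> None) by congruence.
  assert (HA : subterm_at (replace_at v po (app_subst so' lo)) po = Some (app_subst so' lo))
    by (apply subterm_replace_same; auto).
  destruct HSS as [[-> ->]|[[-> ->]|[-> ->]]].
  -
    assert (Hpt : forall y, rsteps Rn (so y) (so' y)).
    { intros y. destruct (Nat.eq_dec y x); [subst; apply rt_step; exact Hsx|rewrite Hso'y; auto; apply rt_refl]. }
    exists (replace_at v po (app_subst so' ro)), (replace_at v po (app_subst so' ro)). split; [|split].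
    + eapply rt_trans.
      * apply (ctxc' (rsteps Rn)); auto. apply rsteps_ctxc.
        apply (replace_var_pointwise (rstep Rn) lo q1 x so so'); auto. apply rstep_ctxc.
      * apply rt_step. apply rstep_rep; auto.
    + apply simB_refl.
    + apply (ctxc' (rsteps Rn)); auto. apply rsteps_ctxc. apply subst_pointwise; auto. apply rstep_ctxc.
  - (* R outer, B inner: linear *)
    destruct Hfair as [Hll _].
    assert (Hlin := Hll lo ro Hlo).
    assert (Hrep : replace_at (app_subst so lo) q1 (so' x) = app_subst so' lo).
    { rewrite (replace_var_linear lo q1 x so (so' x) Hq1).
      - apply subst_ext. intros y _. unfold upd at 1. destruct Nat.eq_dec; subst; auto.
        rewrite Hso'y; auto.
      - intros q' Hq'. apply (Hlin x); auto. }
    rewrite Hrep.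
    assert (Hpt : forall y, conv B (so y) (so' y)).
    { intros y. destruct (Nat.eq_dec y x).
      - subst; apply rt_step. apply rstep_pm. exact Hsx.
      - rewrite Hso'y; auto; apply rt_refl. }
    exists (replace_at v po (app_subst so' ro)), (replace_at v po (app_subst so ro)). split; [|split].
    + apply rt_step. apply rstep_rep; auto.
    + apply simB_sym. apply (ctxc' (conv B)); auto. apply conv_ctxc. apply subst_pointwise; auto. apply sstep_ctxc.
    + apply rt_refl.
  -
    assert (Hpt : forall y, rsteps Rn (so y) (so' y)).
    { intros y. destruct (Nat.eq_dec y x); [subst; apply rt_step; exact Hsx|rewrite Hso'y; auto; apply rt_refl]. }
    exists (replace_at v po (app_subst so' lo)), (replace_at v po (app_subst so' ro)). split; [|split].
    + apply (ctxc' (rsteps Rn)); auto. apply rsteps_ctxc.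
      apply (replace_var_pointwise (rstep Rn) lo q1 x so so'); auto. apply rstep_ctxc.
    + apply rt_step. apply rstep_pm. apply rstep_rep; auto.
    + apply (ctxc' (rsteps Rn)); auto. apply rsteps_ctxc. apply subst_pointwise; auto. apply rstep_ctxc.
Qed.

Lemma nest (N : nat) (IHN : PairOK w N) (v : T) (Hv : simB B v w) (So Si : @rel F) lo ro po so li ri q si :
  So lo ro -> Si li ri -> ((So = Rn /\ Si = Rn) \/ (So = Rn /\ Si = pm B) \/ (So = pm B /\ Si = Rn)) ->
  subterm_at v po = Some (app_subst so lo) -> subterm_at (app_subst so lo) q = Some (app_subst si li) ->
  size (app_subst si li) < S N ->
  J (replace_at v (po ++ q) (app_subst si ri)) (replace_at v po (app_subst so ro)).
Proof.
  intros Hlo Hli HSS Hpo Hq Hsz.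
  assert (HSo : So = Rn \/ So = pm B) by (destruct HSS as [[-> _]|[[-> _]|[-> _]]]; auto).
  assert (HSi : Si = Rn \/ Si = pm B) by (destruct HSS as [[_ ->]|[[_ ->]|[_ ->]]]; auto).
  assert (Hpi : subterm_at v (po ++ q) = Some (app_subst si li)).
  { rewrite (subterm_at_app_some v _ po q Hpo); auto. }
  assert (Hv0 : subterm_at v po <> None) by congruence.
  assert (Leo : le_w B gt w (replace_at v po (app_subst so ro))) by (apply (le_w_res w v So lo ro po so); auto).
  assert (Lei : le_w B gt w (replace_at v (po ++ q) (app_subst si ri))) by (apply (le_w_res w v Si li ri (po ++ q) si); auto).
  assert (Hxi : replace_at v (po ++ q) (app_subst si ri) =
                replace_at v po (replace_at (app_subst so lo) q (app_subst si ri)))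
    by (apply replace_at_app; auto).
  destruct (subterm_at_subst_inv lo (app_subst si li) q so Hq) as [(u&Hu&Hnv&Heq)|(q1&q2&x&->&Hq1&Hq2)].
  2:{ apply (nest_var v So Si lo ro po so li ri q1 q2 si x); auto. }
  destruct (classic (exists q' z, q' <> [] /\ subterm_at (app_subst si li) q' = Some z /\ ~ normal_form Rn z))
    as [(q'&z&Hq'&Hz&Hnz)|Hprime].
  -
    apply NNPP in Hnz. destruct Hnz as (z'&(l3&r3&q3&s3&H3&Hq3&_)).
    set (pn := (po ++ q) ++ (q' ++ q3)).
    assert (Hpn : subterm_at v pn = Some (app_subst s3 l3)).
    { unfold pn. rewrite (subterm_at_app_some v _ (po ++ q) _ Hpi).
      rewrite (subterm_at_app_some _ _ q' q3 Hz). auto. }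
    assert (Hsz3 : size (app_subst s3 l3) < N).
    { destruct (size_subterm _ _ _ Hq3) as [H1 _]. destruct (size_subterm _ _ _ Hz) as [_ H2].
      specialize (H2 Hq'). lia. }
    assert (J1 : J (replace_at v pn (app_subst s3 r3)) (replace_at v po (app_subst so ro))).
    { apply (IHN v Hv l3 r3 pn s3 So lo ro po so); auto. lia. }
    assert (J2 : J (replace_at v pn (app_subst s3 r3)) (replace_at v (po ++ q) (app_subst si ri))).
    { apply (IHN v Hv l3 r3 pn s3 Si li ri (po ++ q) si); auto. lia. }
    assert (gn : gt w (replace_at v pn (app_subst s3 r3))).
    { apply (gt_sim_l B gt RO w v); auto.
      apply (rstep_gt B gt Rn RO HRg). exists l3, r3, pn, s3; auto. }
    apply Jtrans with (replace_at v pn (app_subst s3 r3)); auto. apply J_sym; auto.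
  -
    destruct (var_bound [li; ri; lo; ro]) as (N0&HN0).
    assert (Bli : forall x, occurs x li -> x < N0) by (intros x Hx; apply (HN0 x li); simpl; auto).
    assert (Bri : forall x, occurs x ri -> x < N0) by (intros x Hx; apply (HN0 x ri); simpl; auto).
    assert (Blo : forall x, occurs x lo -> x < N0) by (intros x Hx; apply (HN0 x lo); simpl; auto).
    assert (Bro : forall x, occurs x ro -> x < N0) by (intros x Hx; apply (HN0 x ro); simpl; auto).
    assert (Bu : forall x, occurs x u -> x < N0) by (intros x Hx; apply Blo; eapply pos_occurs; eauto).
    set (rho := swapv N0).
    set (l1 := app_subst (ren rho) li). set (r1 := app_subst (ren rho) ri).
    set (th := fun y => if y <? N0 then so y else si (rho y)).
    assert (Hren : forall t, (forall x, occurs x t -> x < N0) -> app_subst th (app_subst (ren rho) t) = app_subst si t).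
    { intros t Ht. rewrite subst_comp. apply subst_ext. intros y Hy. unfold ren, rho; simpl.
      rewrite swapv_lt by auto. unfold th. destruct (Nat.ltb_spec (y + N0) N0); [lia|].
      unfold rho. rewrite <- (swapv_lt N0 y) by auto. rewrite swapv_inv. auto. }
    assert (Hsame : forall t, (forall x, occurs x t -> x < N0) -> app_subst th t = app_subst so t).
    { intros t Ht; apply subst_ext; intros y Hy; unfold th; destruct (Nat.ltb_spec y N0); auto.
      specialize (Ht y Hy); lia. }
    assert (Hth1 : app_subst th l1 = app_subst si li) by (apply Hren; auto).
    assert (Hth2 : app_subst th r1 = app_subst si ri) by (apply Hren; auto).
    assert (Hunif : app_subst th l1 = app_subst th u) by (rewrite Hth1, Heq, Hsame; auto).
    destruct (mgu_exists l1 u (ex_intro _ th Hunif)) as (sg&Hsg1&Hsg2).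
    destruct (Hsg2 th Hunif) as (dl&Hdl).
    assert (Hdlt : forall t, app_subst th t = app_subst dl (app_subst sg t)).
    { intros t. rewrite subst_comp. apply subst_ext. intros y _. apply Hdl. }
    assert (Hvlo := outer_vars So lo ro HSo Hlo).
    destruct (classic (q = [] /\ variant l1 r1 lo ro)) as [[Hq0 Hvar]|Hnvar].
    + subst q. simpl in Hu. inversion Hu; subst u.
      destruct Hvar as (pi&pi'&_&Hl1&Hr1).
      assert (Hr : app_subst si ri = app_subst so ro).
      { rewrite <- Hth2, Hr1, subst_comp. apply subst_ext. intros y Hy. apply Hvlo in Hy.
        assert (HL : app_subst (fun x => app_subst th (Var (pi x))) lo = app_subst so lo).
        { rewrite <- subst_comp, <- Hl1, Hth1, Heq. auto. }
        exact (subst_ext_inv lo _ _ y HL Hy). }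
      rewrite app_nil_r, Hr. apply J_refl.
    + set (s := replace_at (app_subst sg lo) q (app_subst sg r1)).
      set (t := app_subst sg ro).
      assert (Hov : overlap Si So l1 r1 q lo ro).
      { split; [|split; [|split; [|split]]].
        - exists li, ri; split; auto. exists rho, rho; split; [intros; split; apply swapv_inv|auto].
        - exists lo, ro; split; auto. exists (fun x => x), (fun x => x); split; [auto|].
          split; symmetry; apply subst_id.
        - intros x Hx Hx2.
          assert (x >= N0).
          { destruct Hx as [Hx|Hx]; apply occurs_subst in Hx as (y&Hy&Hxy); inversion Hxy; subst;
            unfold rho; rewrite swapv_lt; auto; lia. }
          destruct Hx2 as [Hx2|Hx2]; [apply Blo in Hx2|apply Bro in Hx2]; lia.
        - exists u; split; auto; split; auto. exists th; auto.
        - intros Hq0 Hv'. apply Hnvar; auto. }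
      assert (Hprime' : forall q0 v0, q0 <> [] -> subterm_at (app_subst sg u) q0 = Some v0 -> normal_form Rn v0).
      { intros q0 v0 Hq0 Hv0' (v1&Hv1). apply Hprime. exists q0, (app_subst dl v0). split; auto. split.
        - rewrite Heq, <- Hsame by auto. rewrite Hdlt. apply subterm_at_subst; auto.
        - intros Hn. apply Hn. exists (app_subst dl v1). apply rstep_substc; auto. }
      assert (Hpcp : pcp_of Rn Si So s t).
      { exists l1, r1, q, lo, ro, sg, u. split; [exact Hov|]. split; [exact Hu|].
        split; [exact (conj Hsg1 Hsg2)|]. split; [exact Hprime'|]. split; reflexivity. }
      assert (HU : union (PCP Rn) (PCP_pm Rn B) s t).
      { destruct HSS as [[-> ->]|[[-> ->]|[-> ->]]]; [left|right; right|right; left]; exact Hpcp. }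
      assert (Hs : replace_at v po (app_subst dl s) = replace_at v (po ++ q) (app_subst si ri)).
      { rewrite Hxi. f_equal. unfold s. rewrite replace_at_subst.
        - rewrite <- !Hdlt, Hsame by auto. rewrite Hth2. reflexivity.
        - rewrite (subterm_at_subst lo u q sg Hu); congruence. }
      assert (Ht : replace_at v po (app_subst dl t) = replace_at v po (app_subst so ro)).
      { unfold t. rewrite <- Hdlt, Hsame; auto. }
      destruct Hfair as [_ Hf]. destruct (Hf s t HU) as [HJ|(i&Hi&Hst)].
      * rewrite <- Hs, <- Ht. apply J_inst; auto.
      * apply (Inv_all B gt E Es Rs n RO Hrun HEn w IH i Hi); auto.
        rewrite <- Hs, <- Ht. pose proof (sstep_inst (Es i) s t v po dl Hv0 Hst) as H.
        destruct H as [H|H]; [left|right]; eapply rstep_mono; try exact H; intros a b Hab; left; auto.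
Qed.

Lemma parallel_sym p1 p2 : parallel p1 p2 -> parallel p2 p1.
Proof. intros (c&i&j&q1&q2&H&->&->). exists c, j, i, q2, q1; auto. Qed.

Lemma pairs : forall N, PairOK w N.
Proof.
  induction N as [|N IHN]; intros v Hv l1 r1 p1 s1 S2 l2 r2 p2 s2 H1 HS2 H2 Hp1 Hp2 Hmin; [lia|].
  destruct (pos_cases p1 p2) as [(q&->)|[(q&->)|Hpar]].
  - assert (Hq : subterm_at (app_subst s1 l1) q = Some (app_subst s2 l2))
      by (rewrite <- (subterm_at_app_some v _ p1 q Hp1); auto).
    destruct (size_subterm _ _ _ Hq) as [Hle _].
    apply J_sym. apply (nest N IHN v Hv Rn S2 l1 r1 p1 s1 l2 r2 q s2); auto.
    + destruct HS2 as [-> | ->]; auto.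
    + lia.
  - assert (Hq : subterm_at (app_subst s2 l2) q = Some (app_subst s1 l1))
      by (rewrite <- (subterm_at_app_some v _ p2 q Hp2); auto).
    destruct (size_subterm _ _ _ Hq) as [Hle _].
    apply (nest N IHN v Hv S2 Rn l2 r2 p2 s2 l1 r1 q s1); auto.
    + destruct HS2 as [-> | ->]; auto.
    + lia.
  - set (x1 := replace_at v p1 (app_subst s1 r1)). set (x2 := replace_at v p2 (app_subst s2 r2)).
    set (z := replace_at x1 p2 (app_subst s2 r2)).
    assert (Hz : z = replace_at x2 p1 (app_subst s1 r1)) by (apply replace_parallel; auto).
    assert (H1z : rstep S2 x1 z).
    { exists l2, r2, p2, s2; split; auto. split; auto. unfold x1. rewrite subterm_parallel; auto. }
    assert (H2z : rstep Rn x2 z).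
    { rewrite Hz. exists l1, r1, p1, s1; split; auto. split; auto. unfold x2.
      rewrite subterm_parallel; auto. apply parallel_sym; auto. }
    destruct HS2 as [-> | ->].
    + exists z, z. split; [apply rt_step; auto|split; [apply simB_refl|apply rt_step; auto]].
    + exists x1, z. split; [apply rt_refl|split; [apply rt_step; apply rstep_pm; auto|apply rt_step; auto]].
Qed.

Lemma LOC_w : LOC B Rn w.
Proof.
  intros v Hv. split.
  - intros x y (l1&r1&p1&s1&H1&Hp1&->) (l2&r2&p2&s2&H2&Hp2&->).
    apply (pairs (S (size (app_subst s1 l1))) v Hv l1 r1 p1 s1 Rn l2 r2 p2 s2); auto; lia.
  - intros x y (l1&r1&p1&s1&H1&Hp1&->) Hy. apply rstep_pm in Hy.
    destruct Hy as (l2&r2&p2&s2&H2&Hp2&->).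
    apply (pairs (S (size (app_subst s1 l1))) v Hv l1 r1 p1 s1 (pm B) l2 r2 p2 s2); auto; lia.
Qed.

End W.

Theorem CR_final : church_rosser_mod Rn B.
Proof.
  apply (CR_of_P B gt Rn RO HRg). intros u. destruct RO as (_&_&Hwf&_).
  induction (Hwf u) as [w _ IHw]. apply (P_of_local B gt Rn RO HRg w IHw). apply LOC_w; auto.
Qed.

End P8.

Lemma seteq_eq {F : Type} (A B : @rel F) : seteq A B -> A = B.
Proof.
  intros H. apply functional_extensionality; intros s. apply functional_extensionality; intros t.
  apply propositional_extensionality. apply H.
Qed.

Lemma conv_mono {F : Type} (A A' : @rel F) s t : (forall a b, A a b -> A' a b) -> conv A s t -> conv A' s t.
Proof.
  intros H. induction 1.
  - apply rt_step. destruct H0; [left|right]; eapply rstep_mono; eauto.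
  - apply rt_refl.
  - eapply rt_trans; eauto.
Qed.

Theorem lemma6p13 (F : Type) (B gt E R : @rel F) (Es Rs : nat -> @rel F) (n : nat) :
  var_preserving B ->
  reduction_order_compat B gt ->
  is_run gt B E Es Rs n ->
  seteq (Es n) empty_rel ->
  seteq (Rs n) R ->
  fair B Es Rs n ->
  ~ compose_applicable empty_rel R ->
  ~ collapse_applicable empty_rel R ->
  canonical_mod R B.
Proof.
  intros HB RO Hrun HEn HR Hfair Hcomp Hcoll.
  apply seteq_eq in HR. subst R.
  assert (HRg := HRg B gt E Es Rs n RO Hrun).
  assert (HCR := CR_final B gt E Es Rs n RO Hrun HEn HB Hfair).
  assert (Hmod : forall s t, rstep_mod (Rs n) B s t -> gt s t).
  { intros s t (s'&t'&H1&H2&H3). apply (gt_compat B gt RO s s' t' t); auto.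
    apply (rstep_gt B gt (Rs n) RO HRg); auto. }
  assert (Hrem : forall l r, Rs n l r -> seteq (Rs n) (add (remove (Rs n) l r) l r) /\ ~ remove (Rs n) l r l r).
  { intros l r Hlr. split.
    - intros s t. unfold add, remove. split.
      + intros H. destruct (classic ((s, t) = (l, r))) as [He|He]; [right|left; auto].
        inversion He; auto.
      + intros [[H _]|[-> ->]]; auto.
    - unfold remove. intros [_ H]; auto. }
  split; [split|split].
  - intros (f&Hf). apply (no_chain B gt RO f). intros k; apply Hmod; auto.
  - exact HCR.
  - intros l r Hlr (u&Hu). apply Hcoll. exists (add empty_rel u r), (remove (Rs n) l r).
    exists l, r, u. split; [apply Hrem; auto|]. split; auto. intros a b; tauto.
  - intros l r Hlr.
    assert (Hnf : normal_form (Rs n) r).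
    { intros (u&(l'&r'&q&sg&H1&H2&H3)).
      destruct (classic ((l', r') = (l, r))) as [He|He].
      + inversion He; subst l' r'. apply (gt_rule_nf B gt RO l r q sg); auto.
      + apply Hcomp. exists empty_rel, (add (remove (Rs n) l r) l u).
        exists (remove (Rs n) l r), l, r, u. split; [apply Hrem; auto|]. split.
        * exists l', r', q, sg; split; [split; auto|auto].
        * split; intros a b; tauto. }
    intros (z'&(r'&z&H1&H2&H3)).
    assert (Hc : conv (union (Rs n) B) r z').
    { eapply rt_trans; [|eapply rt_trans].
      - eapply conv_mono; [|exact H1]. intros a b Hab; right; auto.
      - apply rt_step. left. eapply rstep_mono; [|exact H2]. intros a b Hab; left; auto.
      - eapply conv_mono; [|exact H3]. intros a b Hab; right; auto. }
    destruct (HCR r z' Hc) as (a&b&Ha&Hab&Hb).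
    rewrite <- (nf_rsteps (Rs n) r a Hnf Ha) in Hab.
    assert (Hg1 : gt r' z) by (apply (rstep_gt B gt (Rs n) RO HRg); auto).
    assert (Hg2 : gt r' z') by (apply (gt_sim_r B gt RO r' z z'); auto).
    assert (Hg3 : gt r' b).
    { destruct (rsteps_ge B gt (Rs n) RO HRg z' b Hb) as [<-|H]; auto. apply (gt_trans B gt RO r' z' b); auto. }
    apply (gt_irrefl B gt RO r). apply (gt_compat B gt RO r r' b r); auto. apply simB_sym; auto.
Qed.
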